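(* Suppose $T\in L_{aut}(\mathcal B)$ has the shadowing property. Then the following are equivalent: (1) $T$ is uniformly expansive; (2) $T$ is expansive; (3) $T$ has the unique shadowing property; (4) $T$ is hyperbolic.
   Context: $\mathcal B$ is a Banach space, $S_{\mathcal B}$ its unit sphere. A sequence $(x_n)_{n\in\mathbb Z}$ is a $\delta$-pseudo-orbit if $|x_{n+1}-Tx_n|<\delta$ for all $n$; $y$ $\varepsilon$-shadows it if $|x_n-T^ny|<\varepsilon$ for all $n$. Shadowing property: for every $\varepsilon>0$ there is $\delta>0$ such that every $\delta$-pseudo-orbit is $\varepsilon$-shadowed by some point. Unique shadowing property: there exist $\varepsilon_0,\delta_0>0$ such that for every $0<\varepsilon\le\varepsilon_0$ there is $0<\delta\le\delta_0$ such that every $\delta$-pseudo-orbit is $\varepsilon$-shadowed by exactly one point. $T$ is expansive if there is $c>0$ such that $|T^nx-T^ny|\le c$ for all $n\in\mathbb Z$ implies $x=y$. $T$ is uniformly expansive if there is $n>0$ such that for every $x\in S_{\mathcal B}$ either $|T^nx|\ge2$ or $|T^{-n}x|\ge2$. $T$ is hyperbolic if its spectrum does not meet the unit circle. *)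

(* Defs.v *)
From Stdlib Require Import Reals ZArith.
Open Scope R_scope.

Record Cx : Type := mkCx { Cre : R; Cim : R }.
Definition Cadd (a b : Cx) : Cx := mkCx (Cre a + Cre b) (Cim a + Cim b).
Definition Cmul (a b : Cx) : Cx :=
  mkCx (Cre a * Cre b - Cim a * Cim b) (Cre a * Cim b + Cim a * Cre b).
Definition C1 : Cx := mkCx 1 0.
Definition Cmod (a : Cx) : R := sqrt (Cre a ^ 2 + Cim a ^ 2).

Record Banach : Type := MkBanach {
  carrier :> Type;
  vzero : carrier;
  vadd : carrier -> carrier -> carrier;
  vopp : carrier -> carrier;
  vscal : Cx -> carrier -> carrier;
  vnorm : carrier -> R;
  vadd_assoc : forall x y z, vadd x (vadd y z) = vadd (vadd x y) z;
  vadd_comm : forall x y, vadd x y = vadd y x;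
  vadd_0 : forall x, vadd x vzero = x;
  vadd_opp : forall x, vadd x (vopp x) = vzero;
  vscal_assoc : forall a b x, vscal a (vscal b x) = vscal (Cmul a b) x;
  vscal_1 : forall x, vscal C1 x = x;
  vscal_distr_v : forall a x y, vscal a (vadd x y) = vadd (vscal a x) (vscal a y);
  vscal_distr_c : forall a b x, vscal (Cadd a b) x = vadd (vscal a x) (vscal b x);
  vnorm_eq0 : forall x, vnorm x = 0 -> x = vzero;
  vnorm_triangle : forall x y, vnorm (vadd x y) <= vnorm x + vnorm y;
  vnorm_scal : forall a x, vnorm (vscal a x) = Cmod a * vnorm x;
  vcomplete : forall u : nat -> carrier,
    (forall eps, 0 < eps -> exists N, forall m n, (N <= m)%nat -> (N <= n)%nat ->
        vnorm (vadd (u m) (vopp (u n))) < eps) ->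
    exists l, forall eps, 0 < eps -> exists N, forall n, (N <= n)%nat ->
        vnorm (vadd (u n) (vopp l)) < eps
}.

Arguments vzero {b0}. Arguments vadd {b0}. Arguments vopp {b0}.
Arguments vscal {b0}. Arguments vnorm {b0}.

Definition dist {B : Banach} (x y : B) : R := vnorm (vadd x (vopp y)).

Definition bounded_linear {B : Banach} (T : B -> B) : Prop :=
  (forall x y, T (vadd x y) = vadd (T x) (T y)) /\
  (forall a x, T (vscal a x) = vscal a (T x)) /\
  (exists M, forall x, vnorm (T x) <= M * vnorm x).

Definition is_aut_with_inverse {B : Banach} (T S : B -> B) : Prop :=
  bounded_linear T /\ bounded_linear S /\
  (forall x, S (T x) = x) /\ (forall x, T (S x) = x).

Definition zpow {B : Banach} (T S : B -> B) (n : Z) (x : B) : B :=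
  match n with
  | Z0 => x
  | Zpos p => Nat.iter (Pos.to_nat p) T x
  | Zneg p => Nat.iter (Pos.to_nat p) S x
  end.

Definition pseudo_orbit {B : Banach} (T : B -> B) (delta : R) (xs : Z -> B) : Prop :=
  forall n : Z, dist (xs (n + 1)%Z) (T (xs n)) < delta.

Definition eps_shadows {B : Banach} (T S : B -> B) (eps : R) (xs : Z -> B) (y : B) : Prop :=
  forall n : Z, dist (xs n) (zpow T S n y) < eps.

Definition shadowing {B : Banach} (T S : B -> B) : Prop :=
  forall eps, 0 < eps -> exists delta, 0 < delta /\
    forall xs, pseudo_orbit T delta xs -> exists y, eps_shadows T S eps xs y.

Definition unique_shadowing {B : Banach} (T S : B -> B) : Prop :=
  exists eps0 delta0, 0 < eps0 /\ 0 < delta0 /\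
    forall eps, 0 < eps -> eps <= eps0 ->
      exists delta, 0 < delta /\ delta <= delta0 /\
        forall xs, pseudo_orbit T delta xs ->
          exists y, eps_shadows T S eps xs y /\
            forall y', eps_shadows T S eps xs y' -> y' = y.

Definition expansive {B : Banach} (T S : B -> B) : Prop :=
  exists c, 0 < c /\ forall x y : B,
    (forall n : Z, dist (zpow T S n x) (zpow T S n y) <= c) -> x = y.

Definition uniformly_expansive {B : Banach} (T S : B -> B) : Prop :=
  exists n : nat, (0 < n)%nat /\ forall x : B, vnorm x = 1 ->
    2 <= vnorm (zpow T S (Z.of_nat n) x) \/ 2 <= vnorm (zpow T S (- Z.of_nat n) x).

Definition in_spectrum {B : Banach} (T : B -> B) (lam : Cx) : Prop :=
  let U := fun x : B => vadd (T x) (vopp (vscal lam x)) in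
  ~ exists Rv : B -> B, bounded_linear Rv /\
      (forall x, Rv (U x) = x) /\ (forall x, U (Rv x) = x).

Definition hyperbolic {B : Banach} (T : B -> B) : Prop :=
  forall lam : Cx, Cmod lam = 1 -> ~ in_spectrum T lam.

(* Main.v *)
Require Import Defs.
From Stdlib Require Import Reals ZArith Lra Lia Psatz Classical ClassicalEpsilon.
Open Scope R_scope.


Lemma Cx_eq (a b : Cx) : Cre a = Cre b -> Cim a = Cim b -> a = b.
Proof. destruct a, b; simpl; intros; subst; reflexivity. Qed.

Definition C0 : Cx := mkCx 0 0.
Definition Cneg (a : Cx) : Cx := mkCx (- Cre a) (- Cim a).
Definition Cconj (a : Cx) : Cx := mkCx (Cre a) (- Cim a).
Definition RC (r : R) : Cx := mkCx r 0.
Definition cis (t : R) : Cx := mkCx (cos t) (sin t).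

Lemma Cmod_nonneg a : 0 <= Cmod a.
Proof. apply sqrt_pos. Qed.

Lemma Cmod_RC r : Cmod (RC r) = Rabs r.
Proof. unfold Cmod, RC; simpl. rewrite <- sqrt_Rsqr_abs. f_equal. unfold Rsqr; ring. Qed.

Lemma Cmod_Cneg a : Cmod (Cneg a) = Cmod a.
Proof. unfold Cmod, Cneg; simpl. f_equal; ring. Qed.

Lemma Cmod_conj a : Cmod (Cconj a) = Cmod a.
Proof. unfold Cmod, Cconj; simpl. f_equal; ring. Qed.

Lemma Cmod_mul a b : Cmod (Cmul a b) = Cmod a * Cmod b.
Proof.
  unfold Cmod, Cmul; simpl. rewrite <- sqrt_mult.
  - f_equal; ring.
  - nra.
  - nra.
Qed.

Lemma Cmod_C1 : Cmod Defs.C1 = 1.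
Proof. unfold Cmod, Defs.C1; simpl. replace (_ + _) with 1 by ring. apply sqrt_1. Qed.

Lemma Cmod_cis t : Cmod (cis t) = 1.
Proof. unfold Cmod, cis; simpl. replace (_ + _) with 1. apply sqrt_1.
  pose proof (sin2_cos2 t) as H; unfold Rsqr in H; nra. Qed.

Lemma Cmul_comm a b : Cmul a b = Cmul b a.
Proof. unfold Cmul; apply Cx_eq; simpl; ring. Qed.

Lemma Cmul_cis a b : Cmul (cis a) (cis b) = cis (a + b).
Proof. unfold Cmul, cis; apply Cx_eq; simpl. rewrite cos_plus; ring. rewrite sin_plus; ring. Qed.

Lemma cis_0 : cis 0 = Defs.C1.
Proof. unfold cis; apply Cx_eq; simpl. apply cos_0. apply sin_0. Qed.

Lemma cis_period_nat t (k : nat) : cis (t + 2 * INR k * PI) = cis t.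
Proof. unfold cis. rewrite cos_period, sin_period. reflexivity. Qed.

Lemma cis_period_Z t (k : Z) : cis (t + 2 * IZR k * PI) = cis t.
Proof.
  destruct (Z_le_gt_dec 0 k) as [H|H].
  - rewrite <- (Z2Nat.id k) by lia. rewrite <- INR_IZR_INZ. apply cis_period_nat.
  - set (m := Z.to_nat (- k)).
    assert (IZR k = - INR m) as E.
    { unfold m. rewrite INR_IZR_INZ, Z2Nat.id by lia. rewrite opp_IZR. ring. }
    rewrite E. rewrite <- (cis_period_nat (t + 2 * - INR m * PI) m). f_equal. ring.
Qed.

Lemma Rabs_sin_le_pos x : 0 <= x -> Rabs (sin x) <= x.
Proof.
  intros H. destruct (Req_dec x 0) as [->|Hn]. rewrite sin_0, Rabs_R0; lra.
  pose proof (sin_lt_x x ltac:(lra)). pose proof (SIN_bound x). pose proof PI2_3_2.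
  destruct (Rle_dec x 1).
  - pose proof (sin_ge_0 x H ltac:(lra)). rewrite Rabs_right; lra.
  - apply Rabs_le; lra.
Qed.

Lemma Rabs_sin_le x : Rabs (sin x) <= Rabs x.
Proof.
  destruct (Rle_dec 0 x).
  - rewrite (Rabs_right x) by lra. apply Rabs_sin_le_pos; lra.
  - pose proof (Rabs_sin_le_pos (-x) ltac:(lra)) as H.
    rewrite sin_neg, Rabs_Ropp in H. rewrite (Rabs_left x) by lra. exact H.
Qed.

Definition Csub a b := Cadd a (Cneg b).

Lemma Cmod_sub_cis_sq a b : (Cmod (Csub (cis a) (cis b)))² = 4 * (sin ((a - b)/2))².
Proof.
  unfold Cmod. rewrite Rsqr_sqrt by (apply Rplus_le_le_0_compat; apply pow2_ge_0).
  unfold Csub, Cadd, Cneg, cis; simpl.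
  assert (cos (a - b) = 1 - 2 * sin ((a-b)/2) * sin ((a-b)/2)).
  { rewrite <- cos_2a_sin. f_equal. field. }
  rewrite cos_minus in H. unfold Rsqr.
  pose proof (sin2_cos2 a). pose proof (sin2_cos2 b). unfold Rsqr in *. nra.
Qed.

Lemma cis_chord a b : Cmod (Csub (cis a) (cis b)) <= Rabs (a - b).
Proof.
  apply Rsqr_incr_0_var.
  - rewrite Cmod_sub_cis_sq. pose proof (Rabs_sin_le ((a-b)/2)).
    rewrite (Rsqr_abs (sin _)).
    replace (Rabs ((a - b)/2)) with (Rabs (a-b) / 2) in H.
    2:{ unfold Rdiv. rewrite Rabs_mult. rewrite (Rabs_right (/2)) by lra. reflexivity. }
    pose proof (Rabs_pos (sin ((a-b)/2))). unfold Rsqr. nra.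
  - apply Rabs_pos.
Qed.

Lemma cis_chord_lower y : Rabs y <= PI -> Rabs y / 3 <= Cmod (Csub Defs.C1 (cis y)).
Proof.
  intros Hy. rewrite <- cis_0.
  apply Rsqr_incr_0_var. 2: apply Cmod_nonneg.
  rewrite Cmod_sub_cis_sq.
  replace ((0 - y)/2) with (- (y/2)) by field. rewrite sin_neg.
  rewrite <- Rsqr_neg.
  assert (forall t, 0 <= t -> t <= PI/2 -> t / 3 <= sin t) as L.
  { intros t H0 H1. pose proof (sin_bound t 0 H0 ltac:(lra)) as [H2 _].
    pose proof PI_4.
    simpl in H2. unfold sin_approx in H2. simpl in H2. unfold sin_term in H2. simpl in H2.
    assert (t <= 2) by lra. nra. }
  pose proof PI2_3_2.
  destruct (Rle_dec 0 y).
  - rewrite Rabs_right in Hy |- * by lra.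
    pose proof (L (y/2) ltac:(lra) ltac:(lra)). unfold Rsqr. nra.
  - rewrite Rabs_left in Hy |- * by lra.
    pose proof (L (-y/2) ltac:(lra) ltac:(lra)).
    replace (y/2) with (- (-y/2)) by field. rewrite sin_neg, <- Rsqr_neg. unfold Rsqr. nra.
Qed.


Notation "x +v y" := (vadd x y) (at level 50, left associativity).
Notation "-v x" := (vopp x) (at level 35, right associativity).
Notation "a *v x" := (vscal a x) (at level 40, no associativity).
Definition vsub {B : Banach} (x y : B) : B := x +v -v y.
Notation "x -v y" := (vsub x y) (at level 50, left associativity).

Arguments vadd_assoc {b0} x y z. Arguments vadd_comm {b0} x y. Arguments vadd_0 {b0} x.
Arguments vadd_opp {b0} x. Arguments vscal_assoc {b0} a b x. Arguments vscal_1 {b0} x.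
Arguments vscal_distr_v {b0} a x y. Arguments vscal_distr_c {b0} a b x.
Arguments vnorm_eq0 {b0} x. Arguments vnorm_triangle {b0} x y. Arguments vnorm_scal {b0} a x.

Lemma vadd_0l {B : Banach} (x : B) : vzero +v x = x.
Proof. rewrite vadd_comm. apply vadd_0. Qed.

Lemma vopp_l {B : Banach} (x : B) : -v x +v x = vzero.
Proof. rewrite vadd_comm. apply vadd_opp. Qed.

Lemma vadd_cancel_l {B : Banach} (x y z : B) : x +v y = x +v z -> y = z.
Proof.
  intros H. rewrite <- (vadd_0l y), <- (vadd_0l z), <- (vopp_l x), <- !vadd_assoc, H.
  reflexivity.
Qed.

Lemma vopp_unique {B : Banach} (x y : B) : x +v y = vzero -> y = -v x.
Proof. intros H. apply (vadd_cancel_l x). rewrite H, vadd_opp. reflexivity. Qed.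

Lemma vopp_opp {B : Banach} (x : B) : -v -v x = x.
Proof. symmetry. apply vopp_unique. apply vopp_l. Qed.

Lemma vopp_0 {B : Banach} : -v (vzero : B) = vzero.
Proof. symmetry. apply vopp_unique. apply vadd_0. Qed.

Lemma vopp_add {B : Banach} (x y : B) : -v (x +v y) = -v x +v -v y.
Proof.
  symmetry. apply vopp_unique.
  rewrite (vadd_comm (-v x)), vadd_assoc, <- (vadd_assoc x y), vadd_opp, vadd_0, vadd_opp.
  reflexivity.
Qed.

Lemma vsub_diag {B : Banach} (x : B) : x -v x = vzero.
Proof. apply vadd_opp. Qed.

Lemma vsub_eq0 {B : Banach} (x y : B) : x -v y = vzero -> x = y.
Proof. intros H. unfold vsub in H. apply vopp_unique in H. rewrite <- (vopp_opp y), H, vopp_opp. reflexivity. Qed.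

Lemma vsub_add {B : Banach} (x y : B) : x -v y +v y = x.
Proof. unfold vsub. rewrite <- vadd_assoc, vopp_l, vadd_0. reflexivity. Qed.

Lemma vadd_sub {B : Banach} (x y : B) : x +v y -v y = x.
Proof. unfold vsub. rewrite <- vadd_assoc, vadd_opp, vadd_0. reflexivity. Qed.

Lemma vadd_swap {B : Banach} (a b c d : B) : (a +v b) +v (c +v d) = (a +v c) +v (b +v d).
Proof.
  rewrite !vadd_assoc. f_equal. rewrite <- !vadd_assoc. f_equal. apply vadd_comm.
Qed.

Lemma vsub_add_distr {B : Banach} (a b c d : B) : (a +v b) -v (c +v d) = (a -v c) +v (b -v d).
Proof. unfold vsub. rewrite vopp_add. apply vadd_swap. Qed.

Lemma vsub_sub_distr {B : Banach} (a b c d : B) : (a -v b) -v (c -v d) = (a -v c) -v (b -v d).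
Proof. unfold vsub. rewrite !vopp_add, !vopp_opp. apply vadd_swap. Qed.

Lemma vsub_0r {B : Banach} (x : B) : x -v vzero = x.
Proof. unfold vsub. rewrite vopp_0. apply vadd_0. Qed.

Lemma vsub_0l {B : Banach} (x : B) : vzero -v x = -v x.
Proof. unfold vsub. apply vadd_0l. Qed.

Lemma vopp_sub {B : Banach} (x y : B) : -v (x -v y) = y -v x.
Proof. unfold vsub. rewrite vopp_add, vopp_opp, vadd_comm. reflexivity. Qed.

Lemma vscal_C0 {B : Banach} (x : B) : C0 *v x = vzero.
Proof.
  apply (vadd_cancel_l (C0 *v x)). rewrite vadd_0, <- vscal_distr_c. f_equal.
  apply Cx_eq; simpl; ring.
Qed.

Lemma vscal_0 {B : Banach} (a : Cx) : a *v (vzero : B) = vzero.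
Proof.
  apply (vadd_cancel_l (a *v vzero)). rewrite vadd_0, <- vscal_distr_v, vadd_0. reflexivity.
Qed.

Lemma vscal_Cneg {B : Banach} (a : Cx) (x : B) : Cneg a *v x = -v (a *v x).
Proof.
  apply vopp_unique. rewrite <- vscal_distr_c. rewrite <- (vscal_C0 x). f_equal.
  apply Cx_eq; simpl; ring.
Qed.

Lemma vscal_opp {B : Banach} (a : Cx) (x : B) : a *v (-v x) = -v (a *v x).
Proof. apply vopp_unique. rewrite <- vscal_distr_v, vadd_opp. apply vscal_0. Qed.

Lemma vscal_sub {B : Banach} (a : Cx) (x y : B) : a *v (x -v y) = a *v x -v a *v y.
Proof. unfold vsub. rewrite vscal_distr_v, vscal_opp. reflexivity. Qed.

Lemma vscal_Csub {B : Banach} (a b : Cx) (x : B) : Csub a b *v x = a *v x -v b *v x.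
Proof. unfold Csub, vsub. rewrite vscal_distr_c, vscal_Cneg. reflexivity. Qed.

Lemma vopp_scal {B : Banach} (x : B) : -v x = Cneg Defs.C1 *v x.
Proof. rewrite vscal_Cneg, vscal_1. reflexivity. Qed.

Lemma vscal_comm {B : Banach} (a b : Cx) (x : B) : a *v (b *v x) = b *v (a *v x).
Proof. rewrite !vscal_assoc, Cmul_comm. reflexivity. Qed.

Lemma vnorm_0 {B : Banach} : vnorm (vzero : B) = 0.
Proof. rewrite <- (vscal_C0 (vzero : B)), vnorm_scal. unfold Cmod, C0; simpl.
  replace (0 * (0 * 1) + 0 * (0 * 1)) with 0 by ring. rewrite sqrt_0. ring. Qed.

Lemma vnorm_opp {B : Banach} (x : B) : vnorm (-v x) = vnorm x.
Proof. rewrite vopp_scal, vnorm_scal, Cmod_Cneg, Cmod_C1. ring. Qed.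

Lemma vnorm_nonneg {B : Banach} (x : B) : 0 <= vnorm x.
Proof.
  pose proof (vnorm_triangle x (-v x)). rewrite vadd_opp, vnorm_0, vnorm_opp in H. lra.
Qed.

Lemma vnorm_sub_sym {B : Banach} (x y : B) : vnorm (x -v y) = vnorm (y -v x).
Proof. rewrite <- vopp_sub, vnorm_opp. reflexivity. Qed.

Lemma vnorm_sub_le {B : Banach} (x y : B) : vnorm (x -v y) <= vnorm x + vnorm y.
Proof. unfold vsub. rewrite <- (vnorm_opp y). apply vnorm_triangle. Qed.

Lemma vnorm_rev {B : Banach} (x y : B) : vnorm x - vnorm y <= vnorm (x -v y).
Proof. pose proof (vnorm_triangle (x -v y) y). rewrite vsub_add in H. lra. Qed.

Lemma vnorm_eq0_iff {B : Banach} (x : B) : vnorm x = 0 <-> x = vzero.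
Proof. split. apply vnorm_eq0. intros ->. apply vnorm_0. Qed.

Lemma vnorm_RC {B : Banach} (r : R) (x : B) : vnorm (RC r *v x) = Rabs r * vnorm x.
Proof. rewrite vnorm_scal, Cmod_RC. reflexivity. Qed.

Lemma vnorm_cis {B : Banach} (t : R) (x : B) : vnorm (cis t *v x) = vnorm x.
Proof. rewrite vnorm_scal, Cmod_cis. ring. Qed.

Lemma RC_mul r s : Cmul (RC r) (RC s) = RC (r * s).
Proof. unfold Cmul, RC; apply Cx_eq; simpl; ring. Qed.

Lemma RC_1 : RC 1 = Defs.C1.
Proof. reflexivity. Qed.

Lemma vscal_RC_inv {B : Banach} (r : R) (x : B) : r <> 0 -> RC (/ r) *v (RC r *v x) = x.
Proof. intros H. rewrite vscal_assoc, RC_mul, Rinv_l by auto. apply vscal_1. Qed.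

Lemma vnorm_tri3 {B : Banach} (x y z : B) : vnorm (x -v z) <= vnorm (x -v y) + vnorm (y -v z).
Proof.
  replace (x -v z) with ((x -v y) +v (y -v z)). apply vnorm_triangle.
  unfold vsub. rewrite <- vadd_assoc, (vadd_assoc (-v y)), vopp_l, vadd_0l. reflexivity.
Qed.


Definition lin {B : Banach} (T : B -> B) : Prop :=
  (forall x y, T (x +v y) = T x +v T y) /\ (forall a x, T (a *v x) = a *v T x).

Definition inv_pair {B : Banach} (T S : B -> B) : Prop :=
  (forall x, S (T x) = x) /\ (forall x, T (S x) = x).

Lemma lin_0 {B : Banach} (T : B -> B) : lin T -> T vzero = vzero.
Proof. intros [H1 H2]. rewrite <- (vscal_C0 vzero), H2, !vscal_C0. reflexivity. Qed.

Lemma lin_opp {B : Banach} (T : B -> B) x : lin T -> T (-v x) = -v T x.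
Proof. intros HL. pose proof HL as [H1 H2]. rewrite vopp_scal, H2, <- vopp_scal. reflexivity. Qed.

Lemma lin_sub {B : Banach} (T : B -> B) x y : lin T -> T (x -v y) = T x -v T y.
Proof. intros HL. pose proof HL as [H1 H2]. unfold vsub. rewrite H1, lin_opp by auto. reflexivity. Qed.

Lemma lin_add {B : Banach} (T : B -> B) x y : lin T -> T (x +v y) = T x +v T y.
Proof. intros [H1 _]. auto. Qed.

Lemma lin_scal {B : Banach} (T : B -> B) a x : lin T -> T (a *v x) = a *v T x.
Proof. intros [_ H2]. auto. Qed.

Lemma zpow_nat {B : Banach} (T S : B -> B) (n : nat) x :
  zpow T S (Z.of_nat n) x = Nat.iter n T x.
Proof. destruct n. reflexivity. simpl. rewrite SuccNat2Pos.id_succ. reflexivity. Qed.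

Lemma zpow_negnat {B : Banach} (T S : B -> B) (n : nat) x :
  zpow T S (- Z.of_nat n) x = Nat.iter n S x.
Proof. destruct n. reflexivity. simpl. rewrite SuccNat2Pos.id_succ. reflexivity. Qed.

Lemma Z_nat_cases (k : Z) : (exists n, k = Z.of_nat n) \/ (exists n, k = - Z.of_nat (S n))%Z.
Proof.
  destruct (Z_le_gt_dec 0 k).
  - left. exists (Z.to_nat k). lia.
  - right. exists (Z.to_nat (- k - 1)). lia.
Qed.

Lemma zpow_succ {B : Banach} (T S : B -> B) (k : Z) x : inv_pair T S ->
  zpow T S (k + 1) x = T (zpow T S k x).
Proof.
  intros [HST HTS]. destruct (Z_nat_cases k) as [[n ->]|[n ->]].
  - replace (Z.of_nat n + 1)%Z with (Z.of_nat (Datatypes.S n)) by lia. rewrite !zpow_nat. reflexivity.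
  - replace (- Z.of_nat (Datatypes.S n) + 1)%Z with (- Z.of_nat n)%Z by lia. rewrite !zpow_negnat.
    simpl. rewrite HTS. reflexivity.
Qed.

Lemma zpow_pred {B : Banach} (T S : B -> B) (k : Z) x : inv_pair T S ->
  zpow T S (k - 1) x = S (zpow T S k x).
Proof.
  intros HI. pose proof HI as [HST HTS].
  replace k with ((k - 1) + 1)%Z at 2 by lia. rewrite zpow_succ by auto. rewrite HST. reflexivity.
Qed.

Lemma zpow_0 {B : Banach} (T S : B -> B) x : zpow T S 0 x = x.
Proof. reflexivity. Qed.

Lemma zpow_1 {B : Banach} (T S : B -> B) x : zpow T S 1 x = T x.
Proof. reflexivity. Qed.

Lemma zpow_add {B : Banach} (T S : B -> B) (a b : Z) x : inv_pair T S ->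
  zpow T S (a + b) x = zpow T S a (zpow T S b x).
Proof.
  intros HI. revert a. apply Z.peano_ind.
  - reflexivity.
  - intros a IH. rewrite <- Z.add_1_r.
    replace (a + 1 + b)%Z with ((a + b) + 1)%Z by lia. rewrite !zpow_succ, IH by auto. reflexivity.
  - intros a IH. rewrite <- Z.sub_1_r.
    replace (a - 1 + b)%Z with ((a + b) - 1)%Z by lia. rewrite !zpow_pred, IH by auto. reflexivity.
Qed.

Lemma zpow_neg_cancel {B : Banach} (T S : B -> B) (k : Z) x : inv_pair T S ->
  zpow T S (- k) (zpow T S k x) = x.
Proof. intros HI. rewrite <- zpow_add by auto. replace (- k + k)%Z with 0%Z by lia. reflexivity. Qed.

Lemma lin_zpow {B : Banach} (T S : B -> B) (k : Z) : inv_pair T S -> lin T -> lin S ->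
  lin (zpow T S k).
Proof.
  intros HI HT HS. split.
  - intros x y. revert k. apply Z.peano_ind.
    + reflexivity.
    + intros k IH. rewrite <- Z.add_1_r, !zpow_succ, IH by auto. apply lin_add; auto.
    + intros k IH. rewrite <- Z.sub_1_r, !zpow_pred, IH by auto. apply lin_add; auto.
  - intros a x. revert k. apply Z.peano_ind.
    + reflexivity.
    + intros k IH. rewrite <- Z.add_1_r, !zpow_succ, IH by auto. apply lin_scal; auto.
    + intros k IH. rewrite <- Z.sub_1_r, !zpow_pred, IH by auto. apply lin_scal; auto.
Qed.

Definition Lop {B : Banach} (T : B -> B) (u : Z -> B) (k : Z) : B := u (k + 1)%Z -v T (u k).

Lemma L0_orbit {B : Banach} (T S : B -> B) (u : Z -> B) : inv_pair T S ->
  (forall k, Lop T u k = vzero) -> forall k, u k = zpow T S k (u 0%Z).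
Proof.
  intros HI H. pose proof HI as [HST HTS]. apply Z.peano_ind.
  - reflexivity.
  - intros k IH. rewrite <- Z.add_1_r, zpow_succ by auto. rewrite <- IH.
    apply vsub_eq0. apply H.
  - intros k IH. rewrite <- Z.sub_1_r, zpow_pred by auto. rewrite <- IH.
    pose proof (H (k - 1)%Z) as E. unfold Lop in E. replace (k - 1 + 1)%Z with k in E by lia.
    apply vsub_eq0 in E. rewrite E, HST. reflexivity.
Qed.

Lemma Lop_orbit {B : Banach} (T S : B -> B) y k : inv_pair T S ->
  Lop T (fun j => zpow T S j y) k = vzero.
Proof. intros HI. unfold Lop. rewrite zpow_succ by auto. apply vsub_diag. Qed.

Lemma Lop_sub {B : Banach} (T : B -> B) u v k : lin T ->
  Lop T (fun j => u j -v v j) k = Lop T u k -v Lop T v k.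
Proof. intros HL. unfold Lop. rewrite lin_sub by auto. apply vsub_sub_distr. Qed.

Lemma Lop_scal {B : Banach} (T : B -> B) a u k : lin T ->
  Lop T (fun j => a *v u j) k = a *v Lop T u k.
Proof. intros HL. unfold Lop. rewrite lin_scal by auto. rewrite vscal_sub. reflexivity. Qed.


Lemma aut_facts {B : Banach} (T S : B -> B) : is_aut_with_inverse T S ->
  inv_pair T S /\ lin T /\ lin S /\ exists MT, 0 < MT /\ forall x, vnorm (T x) <= MT * vnorm x.
Proof.
  intros [[HT1 [HT2 [M HM]]] [[HS1 [HS2 _]] [H1 H2]]].
  split. split; auto. split. split; auto. split. split; auto.
  exists (Rabs M + 1). split. pose proof (Rabs_pos M); lra.
  intros x. eapply Rle_trans. apply HM. apply Rmult_le_compat_r. apply vnorm_nonneg.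
  pose proof (Rle_abs M). lra.
Qed.

Lemma zpow_0v {B : Banach} (T S : B -> B) k : inv_pair T S -> lin T -> lin S ->
  zpow T S k vzero = vzero.
Proof. intros. apply lin_0. apply lin_zpow; auto. Qed.

Lemma exp_bounded {B : Banach} (T S : B -> B) : inv_pair T S -> lin T -> lin S ->
  expansive T S -> forall z M, (forall k, vnorm (zpow T S k z) <= M) -> z = vzero.
Proof.
  intros HI HT HS [c [Hc HE]] z M HM.
  assert (0 <= M) as HM0. { pose proof (HM 0%Z). simpl in H. pose proof (vnorm_nonneg z). lra. }
  set (a := c / (M + 1)).
  assert (0 < a) as Ha. { unfold a. apply Rdiv_lt_0_compat; lra. }
  assert (RC a *v z = vzero) as E.
  { apply HE. intros k. unfold Defs.dist. rewrite zpow_0v by auto.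
    change (vnorm (zpow T S k (RC a *v z) -v vzero) <= c). rewrite vsub_0r.
    rewrite lin_scal by (apply lin_zpow; auto). rewrite vnorm_RC, Rabs_right by lra.
    apply Rle_trans with (a * M). apply Rmult_le_compat_l; auto; lra.
    unfold a. apply Rle_trans with (c / (M+1) * (M + 1)). apply Rmult_le_compat_l.
    apply Rlt_le, Rdiv_lt_0_compat; lra. lra. right. field. lra. }
  apply (f_equal vnorm) in E. rewrite vnorm_RC, vnorm_0, Rabs_right in E by lra.
  apply vnorm_eq0. apply Rmult_integral in E. destruct E; auto. lra.
Qed.

Lemma UniqL {B : Banach} (T S : B -> B) : inv_pair T S -> lin T -> lin S -> expansive T S ->
  forall u v Mu Mv, (forall k, vnorm (u k) <= Mu) -> (forall k, vnorm (v k) <= Mv) ->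
  (forall k, Lop T u k = Lop T v k) -> forall k, u k = v k.
Proof.
  intros HI HT HS HE u v Mu Mv Hu Hv HL.
  set (d := fun j => u j -v v j).
  assert (forall k, Lop T d k = vzero) as H0.
  { intros k. unfold d. rewrite Lop_sub by auto. rewrite HL. apply vsub_diag. }
  pose proof (L0_orbit T S d HI H0) as Hd.
  assert (d 0%Z = vzero) as Hd0.
  { apply (exp_bounded T S HI HT HS HE _ (Mu + Mv)). intros k. rewrite <- Hd.
    unfold d. eapply Rle_trans. apply vnorm_sub_le. pose proof (Hu k); pose proof (Hv k); lra. }
  intros k. apply vsub_eq0. change (d k = vzero). rewrite Hd, Hd0. apply zpow_0v; auto.
Qed.

Fixpoint fwd {B : Banach} (T : B -> B) (b : Z -> B) (m : nat) : B :=
  match m with O => vzero | Datatypes.S m' => T (fwd T b m') +v b (Z.of_nat m') end.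
Fixpoint bwd {B : Banach} (S : B -> B) (b : Z -> B) (m : nat) : B :=
  match m with O => vzero | Datatypes.S m' => S (bwd S b m' -v b (- Z.of_nat m' - 1)%Z) end.
Definition seqb {B : Banach} (T S : B -> B) (b : Z -> B) (k : Z) : B :=
  if Z_le_dec 0 k then fwd T b (Z.to_nat k) else bwd S b (Z.to_nat (- k)).

Lemma seqb_L {B : Banach} (T S : B -> B) b k : inv_pair T S -> lin T ->
  Lop T (seqb T S b) k = b k.
Proof.
  intros [HST HTS] HT. unfold Lop, seqb.
  destruct (Z_le_dec 0 (k + 1)); destruct (Z_le_dec 0 k).
  - replace (Z.to_nat (k + 1)) with (Datatypes.S (Z.to_nat k)) by lia. simpl.
    rewrite Z2Nat.id by lia. unfold vsub. rewrite (vadd_comm (T _)), <- vadd_assoc, vadd_opp, vadd_0.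
    reflexivity.
  - assert (k = -1)%Z by lia. subst. simpl. rewrite HTS. rewrite !vsub_0l, vopp_opp. reflexivity.
  - lia.
  - replace (Z.to_nat (- k)) with (Datatypes.S (Z.to_nat (- (k + 1)))) by lia. simpl.
    rewrite HTS. rewrite Z2Nat.id by lia. replace (- - (k + 1) - 1)%Z with k by lia.
    unfold vsub. rewrite vopp_add, vopp_opp, vadd_assoc, vadd_opp, vadd_0l. reflexivity.
Qed.

Lemma Lsolve {B : Banach} (T S : B -> B) : inv_pair T S -> lin T -> lin S -> shadowing T S ->
  exists K, 0 < K /\ forall b beta, 0 < beta -> (forall k, vnorm (b k) <= beta) ->
    exists u, (forall k, Lop T u k = b k) /\ (forall k, vnorm (u k) <= K * beta).
Proof.
  intros HI HT HS Hsh. destruct (Hsh 1 Rlt_0_1) as [delta [Hd Hsh1]].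
  exists (2 / delta). split. apply Rdiv_lt_0_compat; lra.
  intros b beta Hb Hbb. set (c := delta / (2 * beta)).
  assert (0 < c) as Hc. { unfold c. apply Rdiv_lt_0_compat; lra. }
  set (xs := fun k => RC c *v seqb T S b k).
  assert (pseudo_orbit T delta xs) as Hpo.
  { intros n. unfold Defs.dist. change (vnorm (Lop T xs n) < delta). unfold xs.
    rewrite Lop_scal by auto. rewrite seqb_L by auto. rewrite vnorm_RC, Rabs_right by lra.
    apply Rle_lt_trans with (c * beta). apply Rmult_le_compat_l; auto; lra.
    unfold c. replace (delta / (2 * beta) * beta) with (delta / 2) by (field; lra). lra. }
  destruct (Hsh1 xs Hpo) as [y Hy].
  exists (fun k => RC (/ c) *v (xs k -v zpow T S k y)). split.
  - intros k. rewrite Lop_scal by auto. rewrite Lop_sub by auto. rewrite Lop_orbit by auto.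
    rewrite vsub_0r. unfold xs. rewrite Lop_scal by auto. rewrite seqb_L by auto.
    apply vscal_RC_inv. lra.
  - intros k. rewrite vnorm_RC. rewrite Rabs_right by (apply Rle_ge, Rlt_le, Rinv_0_lt_compat; lra).
    pose proof (Hy k) as H. unfold Defs.dist in H. change (vnorm (xs k -v zpow T S k y) < 1) in H.
    apply Rle_trans with (/ c * 1). apply Rmult_le_compat_l. apply Rlt_le, Rinv_0_lt_compat; lra. lra.
    unfold c. right. field. split; lra.
Qed.

Lemma exp_to_us {B : Banach} (T S : B -> B) : shadowing T S -> expansive T S -> unique_shadowing T S.
Proof.
  intros Hsh [c [Hc HE]]. exists (c / 2), 1. split. lra. split. lra.
  intros eps He He0. destruct (Hsh eps He) as [d [Hd Hsd]].
  exists (Rmin d 1). split. apply Rmin_pos; lra. split. apply Rmin_r.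
  intros xs Hxs. destruct (Hsd xs) as [y Hy].
  { intros n. eapply Rlt_le_trans. apply Hxs. apply Rmin_l. }
  exists y. split; auto. intros y' Hy'. apply HE. intros k.
  unfold Defs.dist. pose proof (vnorm_tri3 (zpow T S k y') (xs k) (zpow T S k y)).
  pose proof (Hy k). pose proof (Hy' k). unfold Defs.dist in *. fold (vsub (xs k) (zpow T S k y')) in *.
  fold (vsub (xs k) (zpow T S k y)) in *. fold (vsub (zpow T S k y') (zpow T S k y)).
  rewrite (vnorm_sub_sym (zpow T S k y') (xs k)) in H. lra.
Qed.

Lemma us_to_exp {B : Banach} (T S : B -> B) : inv_pair T S -> unique_shadowing T S -> expansive T S.
Proof.
  intros HI [e0 [d0 [He0 [Hd0 HU]]]]. exists (e0 / 2). split. lra.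
  intros x y Hxy. destruct (HU e0 He0 (Rle_refl _)) as [d [Hd [_ Hsh]]].
  destruct (Hsh (fun k => zpow T S k y)) as [y0 [Hy0 Hun]].
  { intros n. unfold Defs.dist. fold (vsub (zpow T S (n+1) y) (T (zpow T S n y))).
    rewrite zpow_succ by auto. rewrite vsub_diag, vnorm_0. lra. }
  rewrite (Hun x), (Hun y). reflexivity.
  - intros n. unfold Defs.dist. fold (vsub (zpow T S n y) (zpow T S n y)). rewrite vsub_diag, vnorm_0. lra.
  - intros n. unfold Defs.dist. fold (vsub (zpow T S n y) (zpow T S n x)).
    rewrite vnorm_sub_sym. pose proof (Hxy n) as H. unfold Defs.dist in H. fold (vsub (zpow T S n x) (zpow T S n y)) in H. lra.
Qed.


Lemma pow2_ge (m : nat) : 1 <= 2 ^ m /\ INR m <= 2 ^ m.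
Proof.
  induction m as [|m [IH1 IH2]]. simpl. lra.
  rewrite S_INR. simpl. lra.
Qed.

Lemma archi_nat (r : R) : exists n : nat, (0 < n)%nat /\ r < INR n.
Proof.
  destruct (archimed r) as [H1 H2].
  exists (Datatypes.S (Z.to_nat (up r))). split. lia.
  rewrite S_INR. destruct (Z_le_dec 0 (up r)).
  - rewrite INR_IZR_INZ, Z2Nat.id by auto. lra.
  - assert (IZR (up r) <= -1) by (apply IZR_le; lia). pose proof (pos_INR (Z.to_nat (up r))). lra.
Qed.

Lemma ue_to_exp {B : Banach} (T S : B -> B) : inv_pair T S -> lin T -> lin S ->
  uniformly_expansive T S -> expansive T S.
Proof.
  intros HI HT HS [n [Hn HU]]. exists 1. split. lra.
  intros x y Hxy. apply vsub_eq0. set (z := x -v y).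
  assert (forall k, vnorm (zpow T S k z) <= 1) as Hz.
  { intros k. unfold z. rewrite lin_sub by (apply lin_zpow; auto). apply Hxy. }
  apply vnorm_eq0. destruct (Req_dec (vnorm z) 0) as [|Hnz]; auto. exfalso.
  pose proof (vnorm_nonneg z) as Hz0.
  assert (forall m : nat, exists k, 2 ^ m * vnorm z <= vnorm (zpow T S k z)) as Hg.
  { induction m as [|m [k Hk]].
    - exists 0%Z. simpl. lra.
    - set (w := zpow T S k z). fold w in Hk.
      assert (0 < vnorm w) as Hw. { pose proof (pow2_ge m) as [P _]. nra. }
      set (w' := RC (/ vnorm w) *v w).
      assert (vnorm w' = 1) as Hw'.
      { unfold w'. rewrite vnorm_RC, Rabs_right. field. lra.
        apply Rle_ge, Rlt_le, Rinv_0_lt_compat; auto. }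
      assert (forall j, vnorm (zpow T S j w') = / vnorm w * vnorm (zpow T S (j + k) z)) as Hj.
      { intros j. unfold w'. rewrite lin_scal by (apply lin_zpow; auto). rewrite vnorm_RC.
        rewrite Rabs_right by (apply Rle_ge, Rlt_le, Rinv_0_lt_compat; auto).
        unfold w. rewrite zpow_add by auto. reflexivity. }
      destruct (HU w' Hw') as [H|H]; rewrite Hj in H.
      + exists (Z.of_nat n + k)%Z. simpl.
        apply Rmult_le_compat_l with (r := vnorm w) in H; [|lra].
        rewrite <- Rmult_assoc, Rinv_r in H by lra. lra.
      + exists (- Z.of_nat n + k)%Z. simpl.
        apply Rmult_le_compat_l with (r := vnorm w) in H; [|lra].
        rewrite <- Rmult_assoc, Rinv_r in H by lra. lra. }
  destruct (archi_nat (/ vnorm z)) as [m [_ Hm]].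
  destruct (Hg m) as [k Hk]. pose proof (Hz k). pose proof (pow2_ge m) as [_ P].
  assert (1 < INR m * vnorm z).
  { apply Rmult_lt_compat_r with (r := vnorm z) in Hm; [|lra]. rewrite Rinv_l in Hm; lra. }
  nra.
Qed.


Definition tent (n : nat) (k : Z) : R := Rmax 0 (1 - IZR (Z.abs k) / INR n).

Lemma tent_0 n : (0 < n)%nat -> tent n 0 = 1.
Proof. intros. unfold tent. simpl. unfold Rdiv. rewrite Rmult_0_l, Rminus_0_r. apply Rmax_right. lra. Qed.

Lemma tent_bounds n k : (0 < n)%nat -> 0 <= tent n k <= 1.
Proof.
  intros Hn. unfold tent. assert (0 < INR n) by (apply lt_0_INR; auto).
  assert (0 <= IZR (Z.abs k) / INR n). { unfold Rdiv. apply Rmult_le_pos. apply IZR_le; lia. apply Rlt_le, Rinv_0_lt_compat; auto. }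
  split. apply Rmax_l. apply Rmax_lub; lra.
Qed.

Lemma tent_out n k : (0 < n)%nat -> (Z.of_nat n <= Z.abs k)%Z -> tent n k = 0.
Proof.
  intros Hn Hk. unfold tent. assert (0 < INR n) by (apply lt_0_INR; auto).
  apply Rmax_left. assert (INR n <= IZR (Z.abs k)) by (rewrite INR_IZR_INZ; apply IZR_le; lia).
  assert (1 <= IZR (Z.abs k) / INR n).
  { apply Rmult_le_reg_r with (INR n); auto. unfold Rdiv. rewrite Rmult_assoc, Rinv_l; lra. }
  lra.
Qed.

Lemma Rmax0_lip a b : Rabs (Rmax 0 a - Rmax 0 b) <= Rabs (a - b).
Proof. unfold Rmax. destruct (Rle_dec 0 a); destruct (Rle_dec 0 b);
  apply Rabs_le; destruct (Rle_dec 0 (a - b)); [rewrite (Rabs_right (a-b)) by lra| rewrite (Rabs_left (a-b)) by lra|rewrite (Rabs_right (a-b)) by lra| rewrite (Rabs_left (a-b)) by lra|rewrite (Rabs_right (a-b)) by lra| rewrite (Rabs_left (a-b)) by lra|rewrite (Rabs_right (a-b)) by lra| rewrite (Rabs_left (a-b)) by lra]; lra.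
Qed.

Lemma tent_diff n k : (0 < n)%nat -> Rabs (tent n (k + 1) - tent n k) <= / INR n.
Proof.
  intros Hn. assert (0 < INR n) by (apply lt_0_INR; auto). unfold tent.
  eapply Rle_trans. apply Rmax0_lip.
  replace (1 - IZR (Z.abs (k + 1)) / INR n - (1 - IZR (Z.abs k) / INR n))
    with ((IZR (Z.abs k) - IZR (Z.abs (k+1))) * / INR n) by (field; lra).
  rewrite Rabs_mult, (Rabs_right (/ INR n)) by (apply Rle_ge, Rlt_le, Rinv_0_lt_compat; auto).
  rewrite <- (Rmult_1_l (/ INR n)) at 2. apply Rmult_le_compat_r.
  apply Rlt_le, Rinv_0_lt_compat; auto.
  rewrite <- minus_IZR. rewrite <- abs_IZR. apply IZR_le. lia.
Qed.

Lemma vscal_RC_sub {B : Banach} (a b : R) (v : B) : RC a *v v -v RC b *v v = RC (a - b) *v v.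
Proof. rewrite <- vscal_Csub. f_equal. apply Cx_eq; simpl; ring. Qed.

Lemma Lop_tent {B : Banach} (T S : B -> B) n x k : inv_pair T S -> lin T ->
  Lop T (fun j => RC (tent n j) *v zpow T S j x) k
  = RC (tent n (k + 1) - tent n k) *v zpow T S (k + 1) x.
Proof.
  intros HI HT. unfold Lop. rewrite lin_scal by auto. rewrite <- zpow_succ by auto.
  apply vscal_RC_sub.
Qed.

Lemma fin_bound (f : Z -> R) (n : nat) : exists M, 0 <= M /\ forall k, (Z.abs k <= Z.of_nat n)%Z -> f k <= M.
Proof.
  induction n as [|n [M [HM0 HM]]].
  - exists (Rmax 0 (f 0%Z)). split. apply Rmax_l. intros k Hk. assert (k = 0%Z) by lia. subst. apply Rmax_r.
  - exists (Rmax M (Rmax (f (Z.of_nat (Datatypes.S n))) (f (- Z.of_nat (Datatypes.S n))%Z))).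
    split. eapply Rle_trans. apply HM0. apply Rmax_l.
    intros k Hk. destruct (Z_le_dec (Z.abs k) (Z.of_nat n)).
    + eapply Rle_trans. apply HM; auto. apply Rmax_l.
    + eapply Rle_trans. 2: apply Rmax_r.
      destruct (Z_le_dec 0 k).
      * replace k with (Z.of_nat (Datatypes.S n)) by lia. apply Rmax_l.
      * replace k with (- Z.of_nat (Datatypes.S n))%Z by lia. apply Rmax_r.
Qed.

Lemma Lbound {B : Banach} (T S : B -> B) : inv_pair T S -> lin T -> lin S -> shadowing T S ->
  expansive T S -> exists K, 0 < K /\ forall u Mu beta, (forall k, vnorm (u k) <= Mu) -> 0 < beta ->
  (forall k, vnorm (Lop T u k) <= beta) -> forall k, vnorm (u k) <= K * beta.
Proof.
  intros HI HT HS Hsh HE. destruct (Lsolve T S HI HT HS Hsh) as [K [HK HL]].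
  exists K. split; auto. intros u Mu beta Hu Hb Hlu k.
  destruct (HL (Lop T u) beta Hb Hlu) as [v [Hv1 Hv2]].
  rewrite (UniqL T S HI HT HS HE u v Mu (K * beta) Hu Hv2); auto.
Qed.

Lemma exp_to_ue {B : Banach} (T S : B -> B) : is_aut_with_inverse T S -> shadowing T S ->
  expansive T S -> uniformly_expansive T S.
Proof.
  intros Haut Hsh HE. destruct (aut_facts T S Haut) as [HI [HT [HS [MT [HMT HTb]]]]].
  destruct (Lbound T S HI HT HS Hsh HE) as [K [HK HLb]].
  set (beta := 2 * (MT + 1)).
  assert (0 < beta) as Hbeta by (unfold beta; lra).
  assert (forall (n : nat) x, vnorm (zpow T S (Z.of_nat n) x) < 2 -> vnorm (zpow T S (- Z.of_nat n) x) < 2 ->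
            forall j, (Z.abs j <= Z.of_nat n)%Z -> vnorm (zpow T S j x) <= K * beta) as Step1.
  { intros n x H1 H2.
    set (u := fun k => if Z_le_dec (Z.abs k) (Z.of_nat n) then zpow T S k x else vzero).
    destruct (fin_bound (fun k => vnorm (zpow T S k x)) n) as [M [HM0 HM]].
    assert (forall k, vnorm (u k) <= M) as Hu.
    { intros k. unfold u. destruct (Z_le_dec (Z.abs k) (Z.of_nat n)). apply HM; auto.
      rewrite vnorm_0; auto. }
    intros j Hj. replace (zpow T S j x) with (u j) by (unfold u; destruct (Z_le_dec (Z.abs j) (Z.of_nat n)); tauto).
    apply (HLb u M beta Hu Hbeta). intros k. unfold Lop, u.
    destruct (Z_le_dec (Z.abs (k + 1)) (Z.of_nat n)); destruct (Z_le_dec (Z.abs k) (Z.of_nat n)).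
    - rewrite zpow_succ, vsub_diag, vnorm_0 by auto. lra.
    - replace (k + 1)%Z with (- Z.of_nat n)%Z by lia. rewrite lin_0, vsub_0r by auto. unfold beta; lra.
    - replace k with (Z.of_nat n) by lia. rewrite vsub_0l, vnorm_opp.
      eapply Rle_trans. apply HTb. unfold beta.
      pose proof (vnorm_nonneg (zpow T S (Z.of_nat n) x)). nra.
    - rewrite lin_0, vsub_0r, vnorm_0 by auto. lra. }
  destruct (archi_nat (K * (K * beta))) as [n [Hn Hnb]].
  exists n. split; auto. intros x Hx.
  destruct (Rlt_le_dec (vnorm (zpow T S (Z.of_nat n) x)) 2) as [H1|H1]; [|left; auto].
  destruct (Rlt_le_dec (vnorm (zpow T S (- Z.of_nat n) x)) 2) as [H2|H2]; [|right; auto].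
  exfalso. pose proof (Step1 n x H1 H2) as HP. set (P := K * beta) in *.
  assert (0 < P) by (unfold P; nra).
  assert (0 < INR n) by (apply lt_0_INR; auto).
  set (u := fun j => RC (tent n j) *v zpow T S j x).
  assert (forall k, vnorm (u k) <= P) as Hu.
  { intros k. unfold u. rewrite vnorm_RC. pose proof (tent_bounds n k Hn).
    rewrite Rabs_right by lra. destruct (Z_le_dec (Z.abs k) (Z.of_nat n)).
    - pose proof (HP k l). pose proof (vnorm_nonneg (zpow T S k x)). nra.
    - rewrite tent_out by (auto; lia). pose proof (vnorm_nonneg (zpow T S k x)). nra. }
  assert (forall k, vnorm (Lop T u k) <= P / INR n) as HLu.
  { intros k. unfold u. rewrite Lop_tent by auto. rewrite vnorm_RC.
    destruct (Z_le_dec (Z.abs (k + 1)) (Z.of_nat n)).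
    - pose proof (tent_diff n k Hn). pose proof (HP _ l). pose proof (vnorm_nonneg (zpow T S (k+1) x)).
      unfold Rdiv. rewrite Rmult_comm. apply Rmult_le_compat; auto. apply Rabs_pos.
    - rewrite !tent_out by (auto; lia). rewrite Rminus_0_r, Rabs_R0, Rmult_0_l.
      apply Rlt_le, Rdiv_lt_0_compat; auto. }
  pose proof (HLb u P (P / INR n) Hu ltac:(apply Rdiv_lt_0_compat; auto) HLu 0%Z) as Hz0.
  unfold u in Hz0. rewrite tent_0 in Hz0 by auto. rewrite RC_1, vscal_1 in Hz0. simpl in Hz0. rewrite Hx in Hz0.
  assert (K * (P / INR n) < 1).
  { apply Rmult_lt_reg_r with (INR n); auto. unfold Rdiv.
    replace (K * (P * / INR n) * INR n) with (K * P) by (field; lra). lra. }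
  lra.
Qed.


Lemma Cmod1_sq l : Cmod l = 1 -> Cre l * Cre l + Cim l * Cim l = 1.
Proof.
  intros H. unfold Cmod in H. assert (0 <= Cre l ^ 2 + Cim l ^ 2) by nra.
  pose proof (Rsqr_sqrt _ H0). rewrite H in H1. unfold Rsqr in H1. nra.
Qed.

Lemma Cconj_mul l : Cmod l = 1 -> Cmul (Cconj l) l = Defs.C1.
Proof. intros H. apply Cmod1_sq in H. unfold Cmul, Cconj, Defs.C1; apply Cx_eq; simpl; nra. Qed.

Lemma mul_Cconj l : Cmod l = 1 -> Cmul l (Cconj l) = Defs.C1.
Proof. intros H. rewrite Cmul_comm. apply Cconj_mul; auto. Qed.

Definition Uop {B : Banach} (T : B -> B) (l : Cx) (x : B) : B := T x -v l *v x.

Lemma Uop_lin {B : Banach} (T : B -> B) l : lin T -> lin (Uop T l).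
Proof.
  intros HT. split.
  - intros x y. unfold Uop. rewrite lin_add by auto. rewrite vscal_distr_v. apply vsub_add_distr.
  - intros a x. unfold Uop. rewrite (lin_scal T) by auto. rewrite vscal_sub. f_equal. apply vscal_comm.
Qed.


Lemma rot_inv {B : Banach} l : Cmod l = 1 -> inv_pair (B:=B) (vscal l) (vscal (Cconj l)).
Proof.
  intros H. split; intros x; rewrite vscal_assoc; [rewrite Cconj_mul|rewrite mul_Cconj]; auto; apply vscal_1.
Qed.

Lemma rot_norm {B : Banach} l (k : Z) (v : B) : Cmod l = 1 ->
  vnorm (zpow (vscal l) (vscal (Cconj l)) k v) = vnorm v.
Proof.
  intros H. pose proof (rot_inv (B:=B) l H) as HI. revert k. apply Z.peano_ind.
  - reflexivity.
  - intros k IH. rewrite <- Z.add_1_r, zpow_succ, vnorm_scal, H, IH by auto. ring.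
  - intros k IH. rewrite <- Z.sub_1_r, zpow_pred, vnorm_scal, Cmod_conj, H, IH by auto. ring.
Qed.

Lemma rot_comm {B : Banach} (T : B -> B) l (k : Z) (v : B) : Cmod l = 1 -> lin T ->
  T (zpow (vscal l) (vscal (Cconj l)) k v) = zpow (vscal l) (vscal (Cconj l)) k (T v).
Proof.
  intros H HT. pose proof (rot_inv (B:=B) l H) as HI. revert k. apply Z.peano_ind.
  - reflexivity.
  - intros k IH. rewrite <- Z.add_1_r, !zpow_succ, lin_scal, IH by auto. reflexivity.
  - intros k IH. rewrite <- Z.sub_1_r, !zpow_pred, lin_scal, IH by auto. reflexivity.
Qed.

Lemma eig_zero {B : Banach} (T S : B -> B) l d : inv_pair T S -> lin T -> lin S -> expansive T S ->
  Cmod l = 1 -> T d = l *v d -> d = vzero.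
Proof.
  intros HI HT HS HE Hl Hd. pose proof (rot_inv (B:=B) l Hl) as HR.
  set (v := fun k => zpow (vscal l) (vscal (Cconj l)) k d).
  assert (forall k, Lop T v k = vzero) as H0.
  { intros k. unfold Lop, v. rewrite rot_comm, Hd by auto.
    change (l *v d) with (zpow (vscal l) (vscal (Cconj l)) 1 d).
    rewrite <- !zpow_add by auto. rewrite Z.add_comm. apply vsub_diag. }
  pose proof (L0_orbit T S v HI H0) as Hv.
  apply (exp_bounded T S HI HT HS HE d (vnorm d)). intros k.
  rewrite <- Hv. unfold v. rewrite rot_norm by auto. lra.
Qed.

Lemma Uop_inj {B : Banach} (T S : B -> B) l x1 x2 : inv_pair T S -> lin T -> lin S -> expansive T S ->
  Cmod l = 1 -> Uop T l x1 = Uop T l x2 -> x1 = x2.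
Proof.
  intros HI HT HS HE Hl H. apply vsub_eq0. apply (eig_zero T S l); auto.
  assert (Uop T l (x1 -v x2) = vzero) as E.
  { rewrite (lin_sub (Uop T l)) by (apply Uop_lin; auto). rewrite H. apply vsub_diag. }
  unfold Uop in E. apply vsub_eq0 in E. exact E.
Qed.

Lemma Uop_solve {B : Banach} (T S : B -> B) : inv_pair T S -> lin T -> lin S -> shadowing T S ->
  expansive T S -> exists K, 0 < K /\ forall l, Cmod l = 1 -> forall y, exists x, Uop T l x = y /\ vnorm x <= K * vnorm y.
Proof.
  intros HI HT HS Hsh HE. destruct (Lsolve T S HI HT HS Hsh) as [K [HK HL]].
  exists K. split; auto. intros l Hl y.
  destruct (Req_dec (vnorm y) 0) as [Hy0|Hy0].
  { exists vzero. apply vnorm_eq0 in Hy0. subst. split. unfold Uop. rewrite lin_0, vscal_0, vsub_diag by auto. auto.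
    rewrite vnorm_0. pose proof (vnorm_nonneg (vzero : B)). rewrite vnorm_0 in *. lra. }
  pose proof (vnorm_nonneg y).
  pose proof (rot_inv (B:=B) l Hl) as HR.
  set (P := vscal (b0:=B) l). set (Q := vscal (b0:=B) (Cconj l)).
  set (b := fun k => zpow P Q k (-v y)).
  destruct (HL b (vnorm y) ltac:(lra)) as [u [Hu1 Hu2]].
  { intros k. unfold b, P, Q. rewrite rot_norm, vnorm_opp by auto. lra. }
  set (u' := fun k => Q (u (k + 1)%Z)).
  assert (forall k, Lop T u' k = Lop T u k) as HLu.
  { intros k. rewrite Hu1. unfold Lop, u'. unfold Q at 2. rewrite lin_scal by auto. fold Q.
    unfold Q. rewrite <- vscal_sub. fold Q. fold (Lop T u (k + 1)). rewrite Hu1.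
    unfold b. rewrite zpow_succ by auto. destruct HR as [HR1 _]. apply HR1. }
  pose proof (UniqL T S HI HT HS HE u' u (K * vnorm y) (K * vnorm y)) as HU.
  assert (u' 0%Z = u 0%Z) as E.
  { apply HU; auto. intros k. unfold u'. unfold Q. rewrite vnorm_scal, Cmod_conj, Hl, Rmult_1_l. auto. }
  exists (u 0%Z). split; auto.
  pose proof (Hu1 0%Z) as H1. unfold Lop in H1. simpl in H1. unfold u' in E. simpl in E.
  assert (u 1%Z = P (u 0%Z)) as E2. { rewrite <- E. unfold P, Q. destruct HR as [_ HR2]. rewrite HR2. reflexivity. }
  rewrite E2 in H1. unfold b in H1. simpl in H1. unfold Uop. apply (f_equal vopp) in H1.
  rewrite vopp_sub, vopp_opp in H1. exact H1.
Qed.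

Lemma exp_to_hyp {B : Banach} (T S : B -> B) : is_aut_with_inverse T S -> shadowing T S ->
  expansive T S -> hyperbolic T.
Proof.
  intros Haut Hsh HE. destruct (aut_facts T S Haut) as [HI [HT [HS _]]].
  destruct (Uop_solve T S HI HT HS Hsh HE) as [K [HK Hsol]].
  intros l Hl Hsp. apply Hsp.
  assert (forall y, exists x, Uop T l x = y) as Hex. { intros y. destruct (Hsol l Hl y) as [x [? ?]]. eauto. }
  set (Rv := fun y => proj1_sig (constructive_indefinite_description _ (Hex y))).
  assert (forall y, Uop T l (Rv y) = y) as HRv. { intros y. unfold Rv. destruct (constructive_indefinite_description _ _). auto. }
  assert (forall x y, Uop T l x = y -> Rv y = x) as HRu.
  { intros x y Hxy. apply (Uop_inj T S l); auto. rewrite HRv; auto. }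
  exists Rv. split; [|split].
  - split; [|split].
    + intros x y. apply HRu. rewrite lin_add by (apply Uop_lin; auto). rewrite !HRv. reflexivity.
    + intros a x. apply HRu. rewrite lin_scal by (apply Uop_lin; auto). rewrite !HRv. reflexivity.
    + exists K. intros y. destruct (Hsol l Hl y) as [x [Hx1 Hx2]]. rewrite (HRu x y Hx1). auto.
  - intros x. apply HRu. reflexivity.
  - intros x. apply HRv.
Qed.


Fixpoint vsum {B : Banach} (f : nat -> B) (m : nat) : B :=
  match m with O => vzero | Datatypes.S m' => vsum f m' +v f m' end.
Fixpoint rsum (f : nat -> R) (m : nat) : R :=
  match m with O => 0 | Datatypes.S m' => rsum f m' + f m' end.

Lemma vsum_ext {B : Banach} (f g : nat -> B) m : (forall i, (i < m)%nat -> f i = g i) -> vsum f m = vsum g m.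
Proof. induction m; simpl; intros H. auto. rewrite IHm by (intros; apply H; lia). rewrite H by lia. auto. Qed.

Lemma rsum_le (f g : nat -> R) m : (forall i, (i < m)%nat -> f i <= g i) -> rsum f m <= rsum g m.
Proof. induction m; simpl; intros H. lra. pose proof (H m ltac:(lia)). pose proof (IHm ltac:(intros; apply H; lia)). lra. Qed.

Lemma rsum_const a m : rsum (fun _ => a) m = INR m * a.
Proof. induction m; simpl rsum. simpl; ring. rewrite IHm, S_INR. ring. Qed.

Lemma rsum_add f g m : rsum (fun i => f i + g i) m = rsum f m + rsum g m.
Proof. induction m; simpl. ring. rewrite IHm. ring. Qed.

Lemma rsum_scal a f m : rsum (fun i => a * f i) m = a * rsum f m.
Proof. induction m; simpl. ring. rewrite IHm. ring. Qed.

Lemma rsum_tele (g : nat -> R) m : rsum (fun i => g (Datatypes.S i) - g i) m = g m - g O.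
Proof. induction m; simpl. ring. rewrite IHm. ring. Qed.

Lemma vsum_add {B : Banach} (f g : nat -> B) m : vsum (fun i => f i +v g i) m = vsum f m +v vsum g m.
Proof. induction m; simpl. rewrite vadd_0; auto. rewrite IHm. apply vadd_swap. Qed.

Lemma lin_vsum {B : Banach} (T : B -> B) f m : lin T -> T (vsum f m) = vsum (fun i => T (f i)) m.
Proof. intros HT. induction m; simpl. apply lin_0; auto. rewrite lin_add, IHm by auto. reflexivity. Qed.

Lemma lin_scal_fun {B : Banach} (a : Cx) : lin (B:=B) (vscal a).
Proof. split. intros; apply vscal_distr_v. intros; apply vscal_comm. Qed.

Lemma lin_opp_fun {B : Banach} : lin (B:=B) vopp.
Proof. split. intros; apply vopp_add. intros. rewrite !vopp_scal, !vscal_assoc, Cmul_comm. reflexivity. Qed.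

Lemma vsum_scal {B : Banach} a (f : nat -> B) m : vsum (fun i => a *v f i) m = a *v vsum f m.
Proof. symmetry. apply (lin_vsum (vscal a)). apply lin_scal_fun. Qed.

Lemma vsum_opp {B : Banach} (f : nat -> B) m : vsum (fun i => -v f i) m = -v vsum f m.
Proof. symmetry. apply (lin_vsum vopp). apply lin_opp_fun. Qed.

Lemma vsum_sub {B : Banach} (f g : nat -> B) m : vsum (fun i => f i -v g i) m = vsum f m -v vsum g m.
Proof. unfold vsub. rewrite vsum_add, vsum_opp. reflexivity. Qed.

Lemma vsum_norm {B : Banach} (f : nat -> B) m : vnorm (vsum f m) <= rsum (fun i => vnorm (f i)) m.
Proof. induction m; simpl. rewrite vnorm_0; lra. eapply Rle_trans. apply vnorm_triangle. lra. Qed.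

Lemma vsum_swap {B : Banach} (f : nat -> nat -> B) m n :
  vsum (fun i => vsum (fun j => f i j) n) m = vsum (fun j => vsum (fun i => f i j) m) n.
Proof.
  induction m; simpl.
  - induction n; simpl; auto. rewrite <- IHn. rewrite vadd_0. auto.
  - rewrite IHm. rewrite <- vsum_add. reflexivity.
Qed.

Lemma vsum_shift {B : Banach} (h : nat -> B) m :
  vsum (fun j => h (Datatypes.S j)) m = vsum h m -v h O +v h m.
Proof.
  induction m; simpl.
  - rewrite vsub_add. auto.
  - rewrite IHm. unfold vsub. f_equal. rewrite <- !vadd_assoc. f_equal. apply vadd_comm.
Qed.

Lemma vsum_zero {B : Banach} (f : nat -> B) m : (forall i, (i < m)%nat -> f i = vzero) -> vsum f m = vzero.
Proof. induction m; simpl; intros H; auto. rewrite IHm by (intros; apply H; lia). rewrite H by lia. apply vadd_0. Qed.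

Lemma vsum_single {B : Banach} (f : nat -> B) m i0 : (i0 < m)%nat ->
  (forall i, (i < m)%nat -> i <> i0 -> f i = vzero) -> vsum f m = f i0.
Proof.
  induction m; intros H1 H2. lia. simpl.
  destruct (Nat.eq_dec i0 m).
  - subst. rewrite vsum_zero. apply vadd_0l. intros; apply H2; lia.
  - rewrite IHm; [ | lia | intros; apply H2; lia]. rewrite (H2 m) by lia. apply vadd_0.
Qed.

Lemma vsum_const {B : Banach} (v : B) m : vsum (fun _ => v) m = RC (INR m) *v v.
Proof.
  induction m; simpl vsum. simpl. symmetry. apply (vscal_C0 v).
  rewrite IHm, S_INR. rewrite <- (vscal_1 v) at 2. rewrite <- vscal_distr_c. f_equal.
  unfold RC, Cadd, Defs.C1. apply Cx_eq; simpl; ring.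
Qed.


Lemma lip_continuity (f : R -> R) x0 : (forall x y, Rabs (f x - f y) <= Rabs (x - y)) -> continuity_pt f x0.
Proof.
  intros H. unfold continuity_pt, continue_in, limit1_in, limit_in. intros eps He.
  exists eps. split; auto. intros x [_ Hx]. simpl in *. unfold R_dist in *.
  eapply Rle_lt_trans. apply H. auto.
Qed.

Lemma Uop_diff {B : Banach} (T : B -> B) a b x : Uop T a x -v Uop T b x = Csub b a *v x.
Proof. unfold Uop. rewrite vsub_sub_distr, vsub_diag, vsub_0l, vopp_sub, vscal_Csub. reflexivity. Qed.

Definition lowset {B : Banach} (T : B -> B) (t : R) : R -> Prop :=
  fun r => r <= 1 /\ forall x, r * vnorm x <= vnorm (Uop T (cis t) x).

Lemma lowset_bound {B : Banach} (T : B -> B) t : bound (lowset T t).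
Proof. exists 1. intros r [H _]. auto. Qed.

Lemma lowset_ne {B : Banach} (T : B -> B) t : exists r, lowset T t r.
Proof. exists 0. split. lra. intros x. rewrite Rmult_0_l. apply vnorm_nonneg. Qed.

Definition gl {B : Banach} (T : B -> B) (t : R) : R :=
  proj1_sig (completeness (lowset T t) (lowset_bound T t) (lowset_ne T t)).

Lemma gl_lub {B : Banach} (T : B -> B) t : is_lub (lowset T t) (gl T t).
Proof. unfold gl. destruct (completeness _ _ _). auto. Qed.

Lemma gl_spec {B : Banach} (T : B -> B) t x : gl T t * vnorm x <= vnorm (Uop T (cis t) x).
Proof.
  destruct (Req_dec (vnorm x) 0) as [H|H].
  - rewrite H, Rmult_0_r. apply vnorm_nonneg.
  - pose proof (vnorm_nonneg x). pose proof (gl_lub T t) as [_ Hl].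
    assert (gl T t <= vnorm (Uop T (cis t) x) / vnorm x).
    { apply Hl. intros r [_ Hr]. pose proof (Hr x).
      apply Rmult_le_reg_r with (vnorm x). lra. unfold Rdiv. rewrite Rmult_assoc, Rinv_l; lra. }
    apply Rmult_le_compat_r with (r := vnorm x) in H1; [|lra].
    unfold Rdiv in H1. rewrite Rmult_assoc, Rinv_l in H1; lra.
Qed.

Lemma gl_le1 {B : Banach} (T : B -> B) t : gl T t <= 1.
Proof. pose proof (gl_lub T t) as [_ Hl]. apply Hl. intros r [H _]. auto. Qed.

Lemma gl_ge {B : Banach} (T : B -> B) t r : lowset T t r -> r <= gl T t.
Proof. pose proof (gl_lub T t) as [Hu _]. apply Hu. Qed.

Lemma gl_lip {B : Banach} (T : B -> B) t s : gl T t - Rabs (t - s) <= gl T s.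
Proof.
  set (d := Cmod (Csub (cis s) (cis t))).
  assert (d <= Rabs (t - s)) by (unfold d; rewrite Rabs_minus_sym; apply cis_chord).
  assert (0 <= d) by apply Cmod_nonneg.
  assert (gl T t - d <= gl T s).
  { apply gl_ge. split. pose proof (gl_le1 T t). lra.
    intros x. pose proof (gl_spec T t x). pose proof (vnorm_rev (Uop T (cis t) x) (Uop T (cis s) x)).
    rewrite Uop_diff, vnorm_scal in H2. fold d in H2. nra. }
  lra.
Qed.

Lemma gl_cont {B : Banach} (T : B -> B) t : continuity_pt (gl T) t.
Proof.
  apply lip_continuity. intros x y. pose proof (gl_lip T x y). pose proof (gl_lip T y x).
  rewrite Rabs_minus_sym in H0. apply Rabs_le. lra.
Qed.

Lemma hyp_inv {B : Banach} (T : B -> B) t : hyperbolic T ->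
  exists Rv : B -> B, (exists M, forall y, vnorm (Rv y) <= M * vnorm y) /\
   (forall x, Rv (Uop T (cis t) x) = x) /\ (forall y, Uop T (cis t) (Rv y) = y).
Proof.
  intros H. pose proof (H (cis t) (Cmod_cis t)) as Hn. unfold in_spectrum in Hn.
  apply NNPP in Hn. destruct Hn as [Rv [[_ [_ HM]] [H1 H2]]]. exists Rv. split; auto.
Qed.

Lemma gl_pos {B : Banach} (T : B -> B) t : hyperbolic T -> 0 < gl T t.
Proof.
  intros H. destruct (hyp_inv T t H) as [Rv [[M HM] [H1 H2]]].
  set (M' := Rabs M + 1). assert (0 < M') by (unfold M'; pose proof (Rabs_pos M); lra).
  apply Rlt_le_trans with (Rmin 1 (/ M')). apply Rmin_pos. lra. apply Rinv_0_lt_compat; auto.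
  apply gl_ge. split. apply Rmin_l. intros x.
  pose proof (HM (Uop T (cis t) x)). rewrite H1 in H3. pose proof (vnorm_nonneg x).
  pose proof (vnorm_nonneg (Uop T (cis t) x)).
  apply Rle_trans with (/ M' * vnorm x). apply Rmult_le_compat_r; auto. apply Rmin_r.
  apply Rle_trans with (/ M' * (M' * vnorm (Uop T (cis t) x))).
  apply Rmult_le_compat_l. apply Rlt_le, Rinv_0_lt_compat; auto.
  eapply Rle_trans. apply H3. apply Rmult_le_compat_r; auto. unfold M'. pose proof (Rle_abs M). lra.
  right. field. lra.
Qed.

Lemma uniform_low {B : Banach} (T : B -> B) : hyperbolic T ->
  exists c, 0 < c /\ forall t, -(2*PI) <= t <= 2 * PI -> forall x, c * vnorm x <= vnorm (Uop T (cis t) x).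
Proof.
  intros H. pose proof PI_RGT_0.
  destruct (continuity_ab_min (gl T) (-(2*PI)) (2*PI) ltac:(lra) (fun c _ => gl_cont T c)) as [tm [Hm1 Hm2]].
  exists (gl T tm). split. apply gl_pos; auto.
  intros t Ht x. eapply Rle_trans. 2: apply gl_spec. apply Rmult_le_compat_r. apply vnorm_nonneg. auto.
Qed.


Definition Rf {B : Banach} (T : B -> B) (l : Cx) (w : B) : B :=
  epsilon (inhabits vzero) (fun x => Uop T l x = w).

Definition lowP {B : Banach} (T : B -> B) (c : R) : Prop :=
  0 < c /\ forall t, -(2*PI) <= t <= 2 * PI -> forall x, c * vnorm x <= vnorm (Uop T (cis t) x).

Lemma Rf_spec {B : Banach} (T : B -> B) t w : hyperbolic T -> Uop T (cis t) (Rf T (cis t) w) = w.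
Proof.
  intros H. unfold Rf. apply epsilon_spec. destruct (hyp_inv T t H) as [Rv [_ [_ H2]]]. eauto.
Qed.

Lemma U_inj {B : Banach} (T : B -> B) c t x1 x2 : lin T -> lowP T c -> -(2*PI) <= t <= 2 * PI ->
  Uop T (cis t) x1 = Uop T (cis t) x2 -> x1 = x2.
Proof.
  intros HT [Hc Hl] Ht H. apply vsub_eq0. apply vnorm_eq0.
  pose proof (Hl t Ht (x1 -v x2)). rewrite (lin_sub (Uop T (cis t))), H, vsub_diag, vnorm_0 in H0
    by (apply Uop_lin; auto).
  pose proof (vnorm_nonneg (x1 -v x2)). nra.
Qed.

Lemma Rf_bound {B : Banach} (T : B -> B) c t w : hyperbolic T -> lowP T c -> -(2*PI) <= t <= 2 * PI ->
  c * vnorm (Rf T (cis t) w) <= vnorm w.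
Proof. intros H [Hc Hl] Ht. pose proof (Hl t Ht (Rf T (cis t) w)). rewrite Rf_spec in H0; auto. Qed.

Lemma Rf_lip {B : Banach} (T : B -> B) c t s w : hyperbolic T -> lin T -> lowP T c ->
  -(2*PI) <= t <= 2 * PI -> -(2*PI) <= s <= 2 * PI ->
  c * c * vnorm (Rf T (cis t) w -v Rf T (cis s) w) <= Rabs (t - s) * vnorm w.
Proof.
  intros H HT Hlow Ht Hs. pose proof Hlow as [Hc Hl].
  set (a := Rf T (cis s) w). set (b := Rf T (cis t) w).
  assert (Uop T (cis t) (b -v a) = Csub (cis t) (cis s) *v a) as E.
  { rewrite (lin_sub (Uop T (cis t))) by (apply Uop_lin; auto). unfold b. rewrite Rf_spec by auto.
    rewrite <- (Rf_spec T s w H). fold a. apply Uop_diff. }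
  pose proof (Hl t Ht (b -v a)). rewrite E, vnorm_scal in H0.
  pose proof (cis_chord t s). pose proof (Cmod_nonneg (Csub (cis t) (cis s))).
  pose proof (Rf_bound T c s w H Hlow Hs). fold a in H3.
  pose proof (vnorm_nonneg a). pose proof (vnorm_nonneg (b -v a)). pose proof (Rabs_pos (t - s)).
  assert (c * vnorm (b -v a) <= Rabs (t - s) * vnorm a) by nra.
  nra.
Qed.

Lemma roots_sum {B : Banach} (N : nat) (k : Z) (v : B) : (0 < N)%nat -> (0 < Z.abs k)%Z ->
  (2 * Z.abs k <= Z.of_nat N)%Z ->
  vsum (fun j => cis (- (2 * PI / INR N * INR j) * IZR k) *v v) N = vzero.
Proof.
  intros HN Hk1 Hk2. pose proof PI_RGT_0. assert (0 < INR N) by (apply lt_0_INR; auto).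
  set (y := - (2 * PI / INR N) * IZR k).
  set (h := fun j => cis (INR j * y) *v v).
  set (Sm := vsum (fun j => cis (- (2 * PI / INR N * INR j) * IZR k) *v v) N).
  assert (Sm = vsum h N) as E1. { apply vsum_ext. intros i _. unfold h, y. f_equal. f_equal. ring. }
  assert (cis y *v Sm = Sm) as E2.
  { rewrite E1, <- vsum_scal.
    transitivity (vsum (fun j => h (Datatypes.S j)) N).
    { apply vsum_ext. intros i _. unfold h. rewrite vscal_assoc, Cmul_cis, S_INR. f_equal. f_equal. ring. }
    rewrite vsum_shift.
    assert (h N = h O) as E3.
    { unfold h. f_equal. simpl. replace (INR N * y) with (0 * y + 2 * IZR (- k) * PI).
      apply cis_period_Z. unfold y. rewrite opp_IZR. field. lra. }
    rewrite E3. apply vsub_add. }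
  assert (Csub Defs.C1 (cis y) *v Sm = vzero) as E4.
  { rewrite vscal_Csub, vscal_1, E2. apply vsub_diag. }
  apply (f_equal vnorm) in E4. rewrite vnorm_scal, vnorm_0 in E4.
  assert (Rabs y <= PI) as Hy.
  { unfold y. rewrite Rabs_mult, Rabs_Ropp, <- abs_IZR.
    rewrite Rabs_right by (apply Rle_ge, Rlt_le, Rdiv_lt_0_compat; lra).
    assert (2 * IZR (Z.abs k) <= INR N). { rewrite INR_IZR_INZ. rewrite <- mult_IZR. apply IZR_le. auto. }
    apply Rmult_le_reg_l with (INR N); auto. replace (INR N * (2 * PI / INR N * IZR (Z.abs k))) with
      (PI * (2 * IZR (Z.abs k))) by (field; lra). nra. }
  pose proof (cis_chord_lower y Hy).
  assert (0 < Rabs y).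
  { unfold y. rewrite Rabs_mult, Rabs_Ropp, <- abs_IZR.
    apply Rmult_lt_0_compat. rewrite Rabs_right by (apply Rle_ge, Rlt_le, Rdiv_lt_0_compat; lra).
    apply Rdiv_lt_0_compat; lra. apply IZR_lt; auto. }
  apply vnorm_eq0. pose proof (vnorm_nonneg Sm). nra.
Qed.


Definition Gf {B : Banach} (T : B -> B) (N : nat) (k : Z) (w : B) : B :=
  vsum (fun j => cis (- (2 * PI / INR N * INR j) * IZR k) *v Rf T (cis (2 * PI / INR N * INR j)) w) N.

Lemma angle_range (N : nat) (j : nat) : (0 < N)%nat -> (j < N)%nat ->
  -(2*PI) <= 2 * PI / INR N * INR j <= 2 * PI /\ -(2*PI) <= 2 * PI / INR N * (INR j - 1) <= 2 * PI.
Proof.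
  intros HN Hj. pose proof PI_RGT_0. assert (1 <= INR N) by (apply (le_INR 1); lia).
  assert (INR j + 1 <= INR N) by (rewrite <- S_INR; apply le_INR; lia).
  pose proof (pos_INR j).
  assert (0 <= 2 * PI / INR N * INR j <= 2 * PI).
  { split. apply Rmult_le_pos; auto. apply Rlt_le, Rdiv_lt_0_compat; lra.
    apply Rmult_le_reg_l with (INR N). lra.
    replace (INR N * (2 * PI / INR N * INR j)) with (2 * PI * INR j) by (field; lra). nra. }
  assert (2 * PI / INR N <= 2 * PI).
  { apply Rmult_le_reg_l with (INR N). lra. replace (INR N * (2 * PI / INR N)) with (2 * PI) by (field; lra). nra. }
  assert (0 <= 2 * PI / INR N) by (apply Rlt_le, Rdiv_lt_0_compat; lra).
  split. lra. replace (2 * PI / INR N * (INR j - 1)) with (2 * PI / INR N * INR j - 2 * PI / INR N) by ring. lra.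
Qed.

Lemma Gbound_triv {B : Banach} (T : B -> B) c N k w : hyperbolic T -> lowP T c -> (0 < N)%nat ->
  c * vnorm (Gf T N k w) <= INR N * vnorm w.
Proof.
  intros H Hlow HN. pose proof Hlow as [Hc _]. unfold Gf.
  eapply Rle_trans. apply Rmult_le_compat_l. lra. apply vsum_norm.
  rewrite <- rsum_scal, <- rsum_const. apply rsum_le. intros i Hi. rewrite vnorm_cis.
  apply Rf_bound; auto. apply angle_range; auto.
Qed.

Lemma Gbound {B : Banach} (T : B -> B) c N k w : hyperbolic T -> lin T -> lowP T c -> (0 < N)%nat ->
  (0 < Z.abs k)%Z -> (2 * Z.abs k <= Z.of_nat N)%Z ->
  IZR (Z.abs k) * c * c * vnorm (Gf T N k w) <= 3 * INR N * vnorm w.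
Proof.
  intros H HT Hlow HN Hk1 Hk2. pose proof Hlow as [Hc _]. pose proof PI_RGT_0.
  assert (0 < INR N) by (apply lt_0_INR; auto).
  set (a := 2 * PI / INR N). assert (0 < a) by (unfold a; apply Rdiv_lt_0_compat; lra).
  set (y := - a * IZR k).
  set (G := Gf T N k w).
  set (h := fun j => cis (- (a * INR j) * IZR k) *v Rf T (cis (a * (INR j - 1))) w).
  assert (cis y *v G = vsum h N) as E1.
  { unfold G, Gf. fold a. rewrite <- vsum_scal.
    transitivity (vsum (fun j => h (Datatypes.S j)) N).
    { apply vsum_ext. intros i _. unfold h. rewrite vscal_assoc, Cmul_cis, S_INR. f_equal.
      f_equal. unfold y; ring. do 3 f_equal. ring. }
    rewrite vsum_shift.
    assert (h N = h O) as E3.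
    { unfold h. f_equal. simpl. replace (- (a * INR N) * IZR k) with (- (a * 0) * IZR k + 2 * IZR (- k) * PI).
      apply cis_period_Z. unfold a. rewrite opp_IZR. field. lra.
      f_equal. simpl. replace (a * (INR N - 1)) with (a * (0 - 1) + 2 * IZR 1 * PI).
      apply cis_period_Z. unfold a. field. lra. }
    rewrite E3. apply vsub_add. }
  assert (G -v cis y *v G = vsum (fun j => cis (- (a * INR j) * IZR k) *v
            (Rf T (cis (a * INR j)) w -v Rf T (cis (a * (INR j - 1))) w)) N) as E2.
  { rewrite E1. unfold G, Gf. fold a. rewrite <- vsum_sub. apply vsum_ext. intros i _.
    unfold h. rewrite vscal_sub. reflexivity. }
  assert (c * c * vnorm (G -v cis y *v G) <= INR N * (a * vnorm w)) as E4.
  { rewrite E2. eapply Rle_trans. apply Rmult_le_compat_l. nra. apply vsum_norm.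
    rewrite <- rsum_scal, <- rsum_const. apply rsum_le. intros i Hi. rewrite vnorm_cis.
    destruct (angle_range N i HN Hi) as [R1 R2]. fold a in R1, R2.
    eapply Rle_trans. apply Rf_lip; auto.
    replace (a * INR i - a * (INR i - 1)) with a by ring. rewrite Rabs_right by lra. lra. }
  rewrite <- vscal_1 with (x := G) in E4 at 1. rewrite <- vscal_Csub, vnorm_scal in E4.
  assert (Rabs y <= PI) as Hy.
  { unfold y. rewrite Rabs_mult, Rabs_Ropp, <- abs_IZR. rewrite Rabs_right by lra.
    assert (2 * IZR (Z.abs k) <= INR N). { rewrite INR_IZR_INZ. rewrite <- mult_IZR. apply IZR_le. auto. }
    apply Rmult_le_reg_l with (INR N); auto. unfold a. replace (INR N * (2 * PI / INR N * IZR (Z.abs k))) with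
      (PI * (2 * IZR (Z.abs k))) by (field; lra). nra. }
  pose proof (cis_chord_lower y Hy) as Hcl.
  assert (Rabs y = a * IZR (Z.abs k)) as Ey.
  { unfold y. rewrite Rabs_mult, Rabs_Ropp, <- abs_IZR. rewrite Rabs_right by lra. auto. }
  rewrite Ey in Hcl.
  pose proof (vnorm_nonneg G). pose proof (vnorm_nonneg w).
  assert (0 < IZR (Z.abs k)) by (apply IZR_lt; auto).
  assert (c * c * (a * IZR (Z.abs k) / 3 * vnorm G) <= INR N * (a * vnorm w)).
  { eapply Rle_trans. 2: apply E4. apply Rmult_le_compat_l. nra. apply Rmult_le_compat_r; auto. }
  apply Rmult_le_reg_l with (a / 3). apply Rdiv_lt_0_compat; lra.
  replace (a / 3 * (IZR (Z.abs k) * c * c * vnorm G)) with (c * c * (a * IZR (Z.abs k) / 3 * vnorm G)) by field.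
  replace (a / 3 * (3 * INR N * vnorm w)) with (INR N * (a * vnorm w)) by field. auto.
Qed.


Lemma count_ind (n m L : nat) :
  rsum (fun i => if Z_lt_dec (Z.abs (Z.of_nat i - Z.of_nat n)) (Z.of_nat m) then 1 else 0) L <= 2 * INR m.
Proof.
  set (g := fun i : nat => Rmin (2 * INR m) (Rmax 0 (INR i - INR n + INR m))).
  apply Rle_trans with (rsum (fun i => g (Datatypes.S i) - g i) L).
  - apply rsum_le. intros i _. unfold g. rewrite S_INR.
    destruct (Z_lt_dec _ _) as [Hl|Hl].
    + assert (1 <= IZR (Z.of_nat i - Z.of_nat n + Z.of_nat m) <= 2 * INR m - 1).
      { rewrite INR_IZR_INZ. split. apply IZR_le; lia.
        replace (2 * IZR (Z.of_nat m) - 1) with (IZR (2 * Z.of_nat m - 1)) by (rewrite minus_IZR, mult_IZR; simpl; ring).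
        apply IZR_le; lia. }
      rewrite plus_IZR, minus_IZR, <- !INR_IZR_INZ in H.
      unfold Rmin, Rmax. repeat destruct Rle_dec; lra.
    + pose proof (pos_INR m). unfold Rmin, Rmax. repeat destruct Rle_dec; lra.
  - rewrite rsum_tele. unfold g. pose proof (pos_INR m).
    assert (Rmin (2 * INR m) (Rmax 0 (INR L - INR n + INR m)) <= 2 * INR m) by apply Rmin_l.
    assert (0 <= Rmin (2 * INR m) (Rmax 0 (INR 0 - INR n + INR m))).
    { apply Rmin_glb. lra. apply Rmax_l. }
    lra.
Qed.

Lemma vsub_swap_helper {B : Banach} (a b c : B) : a -v b = c -> b = a -v c.
Proof. intros H. rewrite <- H. unfold vsub. rewrite vopp_add, vopp_opp, vadd_assoc, vadd_opp, vadd_0l. auto. Qed.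

Lemma vsub_cancel {B : Banach} (x y : B) : x -v y -v x = -v y.
Proof. unfold vsub. rewrite vadd_comm, vadd_assoc, vopp_l, vadd_0l. auto. Qed.

Lemma key {B : Banach} (T S : B -> B) c z M n m : hyperbolic T -> inv_pair T S -> lin T -> lin S ->
  lowP T c -> (forall k, vnorm (zpow T S k z) <= M) -> (0 < m)%nat -> (m <= n)%nat ->
  vnorm z <= 2 * INR m * M / (INR n * c) + 9 * M / (INR m * (c * c)).
Proof.
  intros Hh HI HT HS Hlow HM Hm Hmn. pose proof Hlow as [Hc _].
  assert (0 < n)%nat as Hn by lia.
  assert (0 < INR n) by (apply lt_0_INR; auto). assert (0 < INR m) by (apply lt_0_INR; auto).
  assert (0 <= M) as HM0. { pose proof (HM 0%Z). pose proof (vnorm_nonneg (zpow T S 0 z)). lra. }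
  assert (0 < c * c) as Hcc by nra. assert (0 < INR m * (c * c)) as Hmcc by (apply Rmult_lt_0_compat; lra).
  set (N := (2 * n)%nat). assert (0 < N)%nat as HN by (unfold N; lia).
  assert (0 < INR N) by (apply lt_0_INR; auto).
  set (u := fun k => RC (tent n k) *v zpow T S k z).
  set (e := Lop T u).
  assert (forall k, vnorm (e k) <= M / INR n) as He.
  { intros k. unfold e, u. rewrite Lop_tent by auto. rewrite vnorm_RC.
    pose proof (tent_diff n k Hn). pose proof (HM (k+1)%Z). pose proof (vnorm_nonneg (zpow T S (k + 1) z)).
    unfold Rdiv. rewrite Rmult_comm. apply Rmult_le_compat; auto. apply Rabs_pos. }
  assert (forall k, (Z.of_nat n <= Z.abs k)%Z -> u k = vzero) as Hu0.
  { intros k Hk. unfold u. rewrite tent_out by auto. apply (vscal_C0 (zpow T S k z)). }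
  set (kk := fun i : nat => (Z.of_nat i - Z.of_nat n)%Z).
  set (V := fun t => vsum (fun i => cis (- t * IZR (kk i)) *v u (kk i)) (2 * n + 1)).
  set (E := fun t => vsum (fun i => cis (- t * IZR (kk i)) *v e (kk i)) (2 * n + 1)).
  assert (forall t, Uop T (cis t) (V t) = -v E t) as Id1.
  { intros t. unfold V. rewrite (lin_vsum (Uop T (cis t))) by (apply Uop_lin; auto).
    set (h := fun i => cis (t - t * IZR (kk i)) *v u (kk i)).
    transitivity (vsum (fun i => (h (Datatypes.S i) -v cis (- t * IZR (kk i)) *v e (kk i)) -v h i) (2 * n + 1)).
    { apply vsum_ext. intros i _.
      assert (T (u (kk i)) = u (kk i + 1)%Z -v e (kk i)) as ET by (apply vsub_swap_helper; reflexivity).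
      rewrite (lin_scal (Uop T (cis t))) by (apply Uop_lin; auto). unfold Uop. rewrite ET, !vscal_sub.
      unfold h. rewrite vscal_assoc, Cmul_cis.
      replace (kk (Datatypes.S i)) with (kk i + 1)%Z by (unfold kk; lia).
      assert (t - t * IZR (kk i + 1) = - t * IZR (kk i)) as A1 by (rewrite plus_IZR; ring).
      assert (- t * IZR (kk i) + t = t - t * IZR (kk i)) as A2 by ring.
      rewrite A1, A2. reflexivity. }
    rewrite !vsum_sub. rewrite vsum_shift.
    assert (h O = vzero) as Hh0 by (unfold h; rewrite (Hu0 (kk O)) by (unfold kk; lia); apply vscal_0).
    assert (h (2 * n + 1)%nat = vzero) as Hh1 by (unfold h; rewrite (Hu0 (kk (2 * n + 1)%nat)) by (unfold kk; lia); apply vscal_0).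
    rewrite Hh0, Hh1, vsub_0r, vadd_0. apply vsub_cancel. }
  assert (vsum (fun j => V (2 * PI / INR N * INR j)) N = RC (INR N) *v z) as Id2.
  { unfold V. rewrite (vsum_swap (fun j i => cis (- (2 * PI / INR N * INR j) * IZR (kk i)) *v u (kk i))).
    rewrite (vsum_single _ _ n) by (try lia; intros i Hi Hin; apply roots_sum; auto; unfold kk, N; lia).
    unfold kk. rewrite Z.sub_diag.
    transitivity (vsum (fun _ => u 0%Z) N).
    { apply vsum_ext. intros. rewrite Rmult_0_r, cis_0, vscal_1. auto. }
    rewrite vsum_const. f_equal. unfold u. rewrite tent_0, RC_1, vscal_1 by auto. auto. }
  assert (forall j, (j < N)%nat -> V (2 * PI / INR N * INR j) =
     -v vsum (fun i => cis (- (2 * PI / INR N * INR j) * IZR (kk i)) *v Rf T (cis (2 * PI / INR N * INR j)) (e (kk i))) (2 * n + 1))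
    as Id3.
  { intros j Hj. destruct (angle_range N j HN Hj) as [R1 _].
    apply (U_inj T c (2 * PI / INR N * INR j)); auto. rewrite Id1.
    rewrite (lin_opp (Uop T _)) by (apply Uop_lin; auto).
    rewrite (lin_vsum (Uop T _)) by (apply Uop_lin; auto). f_equal. unfold E. apply vsum_ext. intros i _.
    rewrite (lin_scal (Uop T _)) by (apply Uop_lin; auto). rewrite Rf_spec by auto. auto. }
  set (G := fun i => Gf T N (kk i) (e (kk i))).
  assert (RC (INR N) *v z = -v vsum G (2 * n + 1)) as Id4.
  { rewrite <- Id2. rewrite (vsum_ext _ _ N Id3). rewrite vsum_opp. f_equal.
    rewrite (vsum_swap (fun j i => cis (- (2 * PI / INR N * INR j) * IZR (kk i)) *v Rf T (cis (2 * PI / INR N * INR j)) (e (kk i)))).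
    reflexivity. }
  apply (f_equal vnorm) in Id4. rewrite vnorm_RC, vnorm_opp, Rabs_right in Id4 by lra.
  pose proof (vsum_norm G (2 * n + 1)) as Hsum. rewrite <- Id4 in Hsum.
  set (ind := fun i : nat => if Z_lt_dec (Z.abs (Z.of_nat i - Z.of_nat n)) (Z.of_nat m) then 1 else 0).
  set (c1 := INR N * (M / INR n) / c). set (c2 := 3 * INR N * (M / INR n) / (INR m * (c * c))).
  assert (0 <= c1) by (unfold c1; apply Rmult_le_pos; [apply Rmult_le_pos; [lra|apply Rmult_le_pos; [lra| apply Rlt_le, Rinv_0_lt_compat; lra]] | apply Rlt_le, Rinv_0_lt_compat; lra]).
  assert (0 <= c2).
  { unfold c2. apply Rmult_le_pos. apply Rmult_le_pos. lra. apply Rmult_le_pos. lra. apply Rlt_le, Rinv_0_lt_compat; lra.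
    apply Rlt_le, Rinv_0_lt_compat. apply Rmult_lt_0_compat. lra. nra. }
  assert (forall i, (i < 2 * n + 1)%nat -> vnorm (G i) <= c1 * ind i + c2) as HG.
  { intros i Hi. unfold ind. pose proof (vnorm_nonneg (G i)). pose proof (He (kk i)).
    destruct (Z_lt_dec _ _) as [Hl|Hl].
    - pose proof (Gbound_triv T c N (kk i) (e (kk i)) Hh Hlow HN) as Hgt. fold (G i) in Hgt.
      cut (vnorm (G i) <= c1). lra. unfold c1. apply Rmult_le_reg_l with c; auto.
      replace (c * (INR N * (M / INR n) / c)) with (INR N * (M / INR n)) by (field; lra).
      eapply Rle_trans. apply Hgt. apply Rmult_le_compat_l; lra.
    - assert (0 < Z.abs (kk i))%Z as Hk0 by (unfold kk; lia).
      pose proof (Gbound T c N (kk i) (e (kk i)) Hh HT Hlow HN Hk0 ltac:(unfold kk, N; lia)) as Hgb. fold (G i) in Hgb.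
      assert (INR m <= IZR (Z.abs (kk i))) as Hmk by (rewrite INR_IZR_INZ; apply IZR_le; unfold kk; lia).
      cut (vnorm (G i) <= c2). lra. unfold c2.
      apply Rmult_le_reg_l with (INR m * (c * c)). apply Rmult_lt_0_compat; [lra | apply Rmult_lt_0_compat; lra].
      replace (INR m * (c * c) * (3 * INR N * (M / INR n) / (INR m * (c * c)))) with (3 * INR N * (M / INR n)) by (field; repeat split; lra).
      apply Rle_trans with (IZR (Z.abs (kk i)) * c * c * vnorm (G i)).
      { replace (INR m * (c * c) * vnorm (G i)) with (INR m * (c * c * vnorm (G i))) by ring.
        replace (IZR (Z.abs (kk i)) * c * c * vnorm (G i)) with (IZR (Z.abs (kk i)) * (c * c * vnorm (G i))) by ring.
        apply Rmult_le_compat_r; auto. nra. }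
      eapply Rle_trans. apply Hgb. apply Rmult_le_compat_l; lra. }
  pose proof (rsum_le _ _ _ HG) as Hr. rewrite rsum_add, rsum_scal, rsum_const in Hr.
  pose proof (count_ind n m (2 * n + 1)) as Hc2. fold ind in Hc2.
  assert (INR N * vnorm z <= c1 * (2 * INR m) + INR (2 * n + 1) * c2) as Hfin.
  { eapply Rle_trans. apply Hsum. eapply Rle_trans. apply Hr. apply Rplus_le_compat_r. apply Rmult_le_compat_l; auto. }
  assert (INR N = 2 * INR n) as EN by (unfold N; rewrite mult_INR; auto).
  assert (INR (2 * n + 1) = 2 * INR n + 1) as EN2 by (rewrite plus_INR, mult_INR; simpl; ring).
  rewrite EN2 in Hfin. unfold c1, c2 in Hfin. rewrite EN in Hfin.
  apply Rmult_le_reg_l with (2 * INR n). lra.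
  eapply Rle_trans. apply Hfin.
  assert (0 <= M / (INR m * (c * c))) by (apply Rmult_le_pos; auto; apply Rlt_le, Rinv_0_lt_compat; lra).
  assert ((2 * INR n + 1) * (3 * (2 * INR n) * (M / INR n) / (INR m * (c * c)))
          <= 2 * INR n * (9 * M / (INR m * (c * c)))).
  { replace ((2 * INR n + 1) * (3 * (2 * INR n) * (M / INR n) / (INR m * (c * c))))
      with ((2 * INR n + 1) * 6 * (M / (INR m * (c * c)))) by (field; repeat split; lra).
    replace (2 * INR n * (9 * M / (INR m * (c * c)))) with (18 * INR n * (M / (INR m * (c * c)))) by (field; repeat split; lra).
    apply Rmult_le_compat_r; auto. assert (1 <= INR n) by (apply (le_INR 1); lia). lra. }
  assert (2 * INR n * (M / INR n) / c * (2 * INR m) = 2 * INR n * (2 * INR m * M / (INR n * c))) by (field; lra).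
  lra.
Qed.


Lemma hyp_bounded {B : Banach} (T S : B -> B) : hyperbolic T -> inv_pair T S -> lin T -> lin S ->
  forall z M, (forall k, vnorm (zpow T S k z) <= M) -> z = vzero.
Proof.
  intros Hh HI HT HS z M HM. destruct (uniform_low T Hh) as [c Hlow].
  assert (lowP T c) as Hl by exact Hlow. pose proof Hlow as [Hc _].
  apply vnorm_eq0. destruct (Req_dec (vnorm z) 0) as [|Hz]; auto. exfalso.
  pose proof (vnorm_nonneg z). assert (0 < vnorm z) by lra.
  assert (vnorm z <= M) by apply (HM 0%Z).
  assert (0 < c * c) by nra.
  destruct (archi_nat (18 * M / (c * c * vnorm z))) as [m [Hm Hmb]].
  destruct (archi_nat (INR m + 4 * INR m * M / (c * vnorm z))) as [n [Hn Hnb]].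
  assert (0 < INR m) by (apply lt_0_INR; auto).
  assert (0 < INR n) by (apply lt_0_INR; auto).
  assert (0 <= 4 * INR m * M / (c * vnorm z)).
  { apply Rmult_le_pos. nra. apply Rlt_le, Rinv_0_lt_compat. nra. }
  assert (m <= n)%nat as Hmn. { apply INR_le. lra. }
  pose proof (key T S c z M n m Hh HI HT HS Hl HM Hm Hmn) as Hk.
  assert (9 * M / (INR m * (c * c)) < vnorm z / 2).
  { apply Rmult_lt_reg_l with (INR m * (c * c)). nra.
    replace (INR m * (c * c) * (9 * M / (INR m * (c * c)))) with (9 * M) by (field; split; lra).
    apply Rmult_lt_compat_r with (r := c * c * vnorm z) in Hmb; [|nra].
    replace (18 * M / (c * c * vnorm z) * (c * c * vnorm z)) with (18 * M) in Hmb by (field; split; lra).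
    nra. }
  assert (2 * INR m * M / (INR n * c) < vnorm z / 2).
  { apply Rmult_lt_reg_l with (INR n * c). nra.
    replace (INR n * c * (2 * INR m * M / (INR n * c))) with (2 * INR m * M) by (field; split; lra).
    assert (4 * INR m * M / (c * vnorm z) < INR n) by lra.
    apply Rmult_lt_compat_r with (r := c * vnorm z) in H7; [|nra].
    replace (4 * INR m * M / (c * vnorm z) * (c * vnorm z)) with (4 * INR m * M) in H7 by (field; split; lra).
    nra. }
  lra.
Qed.

Lemma hyp_to_exp {B : Banach} (T S : B -> B) : is_aut_with_inverse T S -> hyperbolic T -> expansive T S.
Proof.
  intros Haut Hh. destruct (aut_facts T S Haut) as [HI [HT [HS _]]].
  exists 1. split. lra. intros x y Hxy. apply vsub_eq0.
  apply (hyp_bounded T S Hh HI HT HS _ 1). intros k.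
  rewrite (lin_sub (zpow T S k)) by (apply lin_zpow; auto). apply Hxy.
Qed.

Theorem mainTheorem15 (B : Banach) (T S : B -> B) :
  is_aut_with_inverse T S ->
  shadowing T S ->
  (uniformly_expansive T S <-> expansive T S) /\
  (expansive T S <-> unique_shadowing T S) /\
  (unique_shadowing T S <-> hyperbolic T).
Proof.
  intros Haut Hsh. destruct (aut_facts T S Haut) as [HI [HT [HS _]]].
  split; [|split]; split; intros H.
  - apply ue_to_exp; auto.
  - apply exp_to_ue; auto.
  - apply exp_to_us; auto.
  - apply (us_to_exp T S HI); auto.
  - apply exp_to_hyp with S; auto. apply (us_to_exp T S HI); auto.
  - apply exp_to_us; auto. apply hyp_to_exp; auto.
Qed.
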